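(* Let $G$ be a locally compact abelian group with a compact open subgroup $M$. Suppose that $G$ is divisible and torsion-free, that $M$ is adic and that $G/M$ is a discrete Artinian group. Then $G$ is local, i.e. isomorphic to a finite direct product of groups $\mathbf{Q}_p$ ($p$ prime, not necessarily distinct).
   Context: A locally compact group is adic if it is isomorphic to a finite direct product of finite groups and groups $\mathbf{Z}_n=\varprojlim\mathbf{Z}/n^k\mathbf{Z}$. A discrete abelian group is Artinian if it has no infinite strictly decreasing chain of subgroups. Isomorphisms are topological. *)

(* Defs.v *)
From Stdlib Require Import Reals Lra Lia ZArith Znumtheory List.
Open Scope R_scope.

Record TopAb := mkTopAb {
  car :> Type;
  tzero : car;
  tadd : car -> car -> car;
  topp : car -> car;
  topen : (car -> Prop) -> Prop
}.
Arguments tzero {t}.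
Arguments tadd {t} _ _.
Arguments topp {t} _.

Section GroupProps.
Variable A : TopAb.

Definition is_abgroup : Prop :=
  (forall x y z : A, tadd x (tadd y z) = tadd (tadd x y) z) /\
  (forall x y : A, tadd x y = tadd y x) /\
  (forall x : A, tadd tzero x = x) /\
  (forall x : A, tadd (topp x) x = tzero).

Definition is_topology : Prop :=
  topen A (fun _ => True) /\
  (forall U V, topen A U -> topen A V -> topen A (fun x => U x /\ V x)) /\
  (forall F : (A -> Prop) -> Prop, (forall U, F U -> topen A U) ->
     topen A (fun x => exists U, F U /\ U x)).

Definition sub_continuous : Prop :=
  forall U, topen A U -> forall x y : A, U (tadd x (topp y)) ->
    exists V W, topen A V /\ topen A W /\ V x /\ W y /\
      forall a b, V a -> W b -> U (tadd a (topp b)).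

Definition hausdorff : Prop :=
  forall x y : A, x <> y -> exists U V, topen A U /\ topen A V /\ U x /\ V y /\
    forall z, ~ (U z /\ V z).

Definition tcompact (K : A -> Prop) : Prop :=
  forall F : (A -> Prop) -> Prop, (forall U, F U -> topen A U) ->
    (forall x, K x -> exists U, F U /\ U x) ->
    exists l : list (A -> Prop), (forall U, In U l -> F U) /\
      (forall x, K x -> exists U, In U l /\ U x).

Definition locally_compact : Prop :=
  forall x : A, exists U K, topen A U /\ U x /\ (forall y, U y -> K y) /\ tcompact K.

Definition is_LCA : Prop :=
  is_abgroup /\ is_topology /\ sub_continuous /\ hausdorff /\ locally_compact.

Definition is_subgroup (M : A -> Prop) : Prop :=
  M tzero /\ (forall x y, M x -> M y -> M (tadd x y)) /\ (forall x, M x -> M (topp x)).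

Definition tmuln (n : nat) (x : A) : A := Nat.iter n (tadd x) tzero.

Definition divisible : Prop :=
  forall (x : A) (n : nat), (0 < n)%nat -> exists y, tmuln n y = x.

Definition torsion_free : Prop :=
  forall (x : A) (n : nat), (0 < n)%nat -> tmuln n x = tzero -> x = tzero.

Definition finite_car : Prop := exists l : list A, forall x, In x l.

Definition discrete : Prop := forall U : A -> Prop, topen A U.
End GroupProps.

Definition top_iso (A B : TopAb) : Prop :=
  exists f : A -> B,
    (forall x y, f (tadd x y) = tadd (f x) (f y)) /\
    (forall x y, f x = f y -> x = y) /\
    (forall y, exists x, f x = y) /\
    (forall V, topen B V -> topen A (fun x => V (f x))) /\
    (forall U, topen A U -> topen B (fun y => exists x, U x /\ f x = y)).

Section Sub.
Variables (A : TopAb) (M : A -> Prop) (HM : is_subgroup A M).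

Definition sub_zero : {x : A | M x} :=
  exist _ tzero (proj1 HM).
Definition sub_add (x y : {x : A | M x}) : {x : A | M x} :=
  exist _ (tadd (proj1_sig x) (proj1_sig y))
    (proj1 (proj2 HM) _ _ (proj2_sig x) (proj2_sig y)).
Definition sub_opp (x : {x : A | M x}) : {x : A | M x} :=
  exist _ (topp (proj1_sig x)) (proj2 (proj2 HM) _ (proj2_sig x)).
Definition sub_open (V : {x : A | M x} -> Prop) : Prop :=
  exists U, topen A U /\ forall x, V x <-> U (proj1_sig x).

Definition subTopAb : TopAb := mkTopAb {x : A | M x} sub_zero sub_add sub_opp sub_open.
End Sub.

Definition prod_open (A B : TopAb) (V : A * B -> Prop) : Prop :=
  forall z, V z -> exists U W, topen A U /\ topen B W /\ U (fst z) /\ W (snd z) /\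
    forall a b, U a -> W b -> V (a, b).

Definition prodTopAb (A B : TopAb) : TopAb :=
  mkTopAb (A * B) (tzero, tzero)
    (fun x y => (tadd (fst x) (fst y), tadd (snd x) (snd y)))
    (fun x => (topp (fst x), topp (snd x)))
    (prod_open A B).

Definition unitTopAb : TopAb :=
  mkTopAb unit tt (fun _ _ => tt) (fun _ => tt) (fun _ => True).

Fixpoint bigprod (l : list TopAb) : TopAb :=
  match l with
  | nil => unitTopAb
  | A :: l' => prodTopAb A (bigprod l')
  end.

(** * The n-adic integers Z_n = lim Z/n^k Z  (n >= 2)
    An element is a compatible family (x_k)_k with x_k in [0, n^k)
    representing the class mod n^k; the topology is the inverse-limit
    (product of discrete) topology. *)
Section Zadic.
Open Scope Z_scope.
Variables (n : Z) (Hn : 2 <= n).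

Definition npow (k : nat) : Z := n ^ Z.of_nat k.

Definition Zn_ok (x : nat -> Z) : Prop :=
  forall k, 0 <= x k < npow k /\ exists z, x (S k) - x k = z * npow k.

Lemma npow_pos k : 0 < npow k.
Proof. unfold npow; apply Z.pow_pos_nonneg; lia. Qed.

Lemma npow_S k : npow (S k) = n * npow k.
Proof. unfold npow; rewrite Nat2Z.inj_succ, Z.pow_succ_r; lia. Qed.

Lemma Zn_norm (u : nat -> Z) :
  (forall k, exists z, u (S k) - u k = z * npow k) ->
  Zn_ok (fun k => u k mod npow k).
Proof.
  intros H k; split.
  - apply Z.mod_pos_bound, npow_pos.
  - destruct (H k) as [z Hz].
    pose proof (npow_pos k) as P0. pose proof (npow_pos (S k)) as P1.
    rewrite (Z.mod_eq (u (S k))), (Z.mod_eq (u k)) by lia.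
    set (q1 := u (S k) / npow (S k)). set (q0 := u k / npow k).
    rewrite npow_S.
    exists (z - n * q1 + q0).
    assert (E : u (S k) = u k + z * npow k) by lia. rewrite E. ring.
Qed.

Definition Zn_car := {x : nat -> Z | Zn_ok x}.

Lemma Zn_zero_ok : Zn_ok (fun _ => 0).
Proof. intros k; split; [pose proof (npow_pos k); lia| exists 0; ring]. Qed.

Lemma Zn_add_ok (x y : Zn_car) :
  Zn_ok (fun k => (proj1_sig x k + proj1_sig y k) mod npow k).
Proof.
  apply (Zn_norm (fun k => proj1_sig x k + proj1_sig y k)); intros k.
  destruct (proj2 (proj2_sig x k)) as [a Ha], (proj2 (proj2_sig y k)) as [b Hb].
  exists (a + b); lia.
Qed.

Lemma Zn_opp_ok (x : Zn_car) :
  Zn_ok (fun k => (- proj1_sig x k) mod npow k).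
Proof.
  apply (Zn_norm (fun k => - proj1_sig x k)); intros k.
  destruct (proj2 (proj2_sig x k)) as [a Ha]. exists (- a); lia.
Qed.

Definition Zn_open (V : Zn_car -> Prop) : Prop :=
  forall x, V x -> exists k, forall y, proj1_sig y k = proj1_sig x k -> V y.

Definition Zadic : TopAb :=
  mkTopAb Zn_car (exist _ _ Zn_zero_ok)
    (fun x y => exist _ _ (Zn_add_ok x y))
    (fun x => exist _ _ (Zn_opp_ok x)) Zn_open.
End Zadic.

(** * The p-adic numbers Q_p  (p prime), as the inverse limit
    Q_p = lim_k Q_p / p^k Z_p = lim_k Z[1/p] / p^k Z.
    An element is a family (x_k)_k of reals with x_k in Z[1/p] /\ [0, p^k)
    (the canonical representative of the class mod p^k), compatible
    (x_{k+1} = x_k mod p^k); the topology is the inverse-limit topology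
    (product of discrete topologies). *)
Section Qadic.
Variables (p : Z) (Hp : prime p).

Definition ppow (k : nat) : R := IZR p ^ k.

Definition in_Z1p (x : R) : Prop := exists (j : nat) (z : Z), x * ppow j = IZR z.

Definition modR (x m : R) : R := x - IZR (Int_part (x / m)) * m.

Definition Qp_ok (x : nat -> R) : Prop :=
  forall k, in_Z1p (x k) /\ 0 <= x k < ppow k /\
            exists z, x (S k) - x k = IZR z * ppow k.

Lemma ppow_pos k : 0 < ppow k.
Proof.
  unfold ppow; apply pow_lt; apply IZR_lt; pose proof (prime_ge_2 p Hp); lia.
Qed.

Lemma ppow_IZR k : ppow k = IZR (p ^ Z.of_nat k).
Proof. unfold ppow; apply pow_IZR. Qed.

Lemma modR_bound x m : 0 < m -> 0 <= modR x m < m.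
Proof.
  intros Hm; unfold modR.
  destruct (base_Int_part (x / m)) as [H1 H2].
  set (q := IZR (Int_part (x / m))) in *.
  assert (E : x = (x / m) * m) by (field; lra).
  split; rewrite E at 1; nra.
Qed.

Lemma in_Z1p_add x y : in_Z1p x -> in_Z1p y -> in_Z1p (x + y).
Proof.
  intros [i [a Ha]] [j [b Hb]]. exists (i + j)%nat.
  exists (a * p ^ Z.of_nat j + b * p ^ Z.of_nat i)%Z.
  rewrite plus_IZR, !mult_IZR, <- !ppow_IZR. unfold ppow in *.
  rewrite pow_add, <- Ha, <- Hb. ring.
Qed.

Lemma in_Z1p_opp x : in_Z1p x -> in_Z1p (- x).
Proof.
  intros [i [a Ha]]; exists i, (- a)%Z. rewrite opp_IZR, <- Ha; ring.
Qed.

Lemma in_Z1p_int_mul z k : in_Z1p (IZR z * ppow k).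
Proof.
  exists O, (z * p ^ Z.of_nat k)%Z. rewrite mult_IZR, <- ppow_IZR.
  unfold ppow at 2; simpl; ring.
Qed.

Lemma Qp_norm (u : nat -> R) :
  (forall k, in_Z1p (u k) /\ exists z, u (S k) - u k = IZR z * ppow k) ->
  Qp_ok (fun k => modR (u k) (ppow k)).
Proof.
  intros H k; destruct (H k) as [Hk [z Hz]]; split; [|split].
  - unfold modR; unfold Rminus; apply in_Z1p_add; auto.
    replace (- (IZR (Int_part (u k / ppow k)) * ppow k)) with
      (IZR (- Int_part (u k / ppow k)) * ppow k) by (rewrite opp_IZR; ring).
    apply in_Z1p_int_mul.
  - apply modR_bound, ppow_pos.
  - unfold modR.
    exists (z - Int_part (u (S k) / ppow (S k)) * p + Int_part (u k / ppow k))%Z.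
    rewrite plus_IZR, minus_IZR, mult_IZR.
    replace (ppow (S k)) with (IZR p * ppow k) by (unfold ppow; simpl; ring).
    replace (u (S k)) with (u k + IZR z * ppow k) at 1 by lra. ring.
Qed.

Definition Qp_car := {x : nat -> R | Qp_ok x}.

Lemma Qp_zero_ok : Qp_ok (fun _ => 0).
Proof.
  intros k; split; [|split].
  - exists O, 0%Z; ring.
  - pose proof (ppow_pos k); lra.
  - exists 0%Z; ring.
Qed.

Lemma Qp_add_ok (x y : Qp_car) :
  Qp_ok (fun k => modR (proj1_sig x k + proj1_sig y k) (ppow k)).
Proof.
  apply (Qp_norm (fun k => proj1_sig x k + proj1_sig y k)); intros k.
  destruct (proj2_sig x k) as [Hx [_ [a Ha]]], (proj2_sig y k) as [Hy [_ [b Hb]]].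
  split; [now apply in_Z1p_add|]. exists (a + b)%Z. rewrite plus_IZR; lra.
Qed.

Lemma Qp_opp_ok (x : Qp_car) :
  Qp_ok (fun k => modR (- proj1_sig x k) (ppow k)).
Proof.
  apply (Qp_norm (fun k => - proj1_sig x k)); intros k.
  destruct (proj2_sig x k) as [Hx [_ [a Ha]]].
  split; [now apply in_Z1p_opp|]. exists (- a)%Z. rewrite opp_IZR; lra.
Qed.

Definition Qp_open (V : Qp_car -> Prop) : Prop :=
  forall x, V x -> exists k, forall y, proj1_sig y k = proj1_sig x k -> V y.

Definition Qadic : TopAb :=
  mkTopAb Qp_car (exist _ _ Qp_zero_ok)
    (fun x y => exist _ _ (Qp_add_ok x y))
    (fun x => exist _ _ (Qp_opp_ok x)) Qp_open.
End Qadic.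

Definition adic_factor (A : TopAb) : Prop :=
  (is_abgroup A /\ finite_car A /\ discrete A) \/
  (exists (n : Z) (Hn : (2 <= n)%Z), top_iso A (Zadic n Hn)).

Definition adic (A : TopAb) : Prop :=
  exists l : list TopAb, Forall adic_factor l /\ top_iso A (bigprod l).

Definition local (A : TopAb) : Prop :=
  exists l : list {p : Z | prime p},
    top_iso A (bigprod (map (fun s => Qadic (proj1_sig s) (proj2_sig s)) l)).

(** G/M Artinian, expressed via the correspondence theorem: subgroups of G/M
    are exactly H/M for subgroups H of G containing M (H |-> H/M is an
    order isomorphism). *)
Definition quotient_artinian (A : TopAb) (M : A -> Prop) : Prop :=
  ~ exists H : nat -> (A -> Prop),
      (forall i, is_subgroup A (H i) /\ (forall x, M x -> H i x)) /\
      (forall i, (forall x, H (S i) x -> H i x) /\ exists x, H i x /\ ~ H (S i) x).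

(* Main.v *)
Require Import Defs.
From Stdlib Require Import Reals ZArith Znumtheory List Lia Lra Zpow_facts Arith.
From Stdlib Require Import FunctionalExtensionality PropExtensionality ProofIrrelevance
  ClassicalEpsilon Classical.

Section Grp.
Variable A : TopAb.
Hypothesis HA : is_abgroup A.

Lemma g_assoc (x y z : A) : tadd x (tadd y z) = tadd (tadd x y) z.
Proof. apply HA. Qed.
Lemma g_comm (x y : A) : tadd x y = tadd y x.
Proof. apply HA. Qed.
Lemma g_0l (x : A) : tadd tzero x = x.
Proof. apply HA. Qed.
Lemma g_0r (x : A) : tadd x tzero = x.
Proof. rewrite g_comm; apply g_0l. Qed.
Lemma g_Nl (x : A) : tadd (topp x) x = tzero.
Proof. apply HA. Qed.
Lemma g_Nr (x : A) : tadd x (topp x) = tzero.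
Proof. rewrite g_comm; apply g_Nl. Qed.
Lemma g_cancel_l (a x y : A) : tadd a x = tadd a y -> x = y.
Proof.
  intros H. rewrite <- (g_0l x), <- (g_0l y), <- (g_Nl a), <- !g_assoc, H; reflexivity.
Qed.
Lemma g_opp_unique (x y : A) : tadd x y = tzero -> y = topp x.
Proof. intros H; apply (g_cancel_l x). rewrite H, g_Nr; reflexivity. Qed.
Lemma g_oppK (x : A) : topp (topp x) = x.
Proof. symmetry; apply g_opp_unique, g_Nl. Qed.
Lemma g_opp0 : topp (@tzero A) = tzero.
Proof. symmetry; apply g_opp_unique, g_0l. Qed.
Lemma g_oppD (x y : A) : topp (tadd x y) = tadd (topp x) (topp y).
Proof.
  symmetry; apply g_opp_unique.
  rewrite (g_comm (topp x)), g_assoc, <- (g_assoc x y), g_Nr, g_0r, g_Nr; reflexivity.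
Qed.
Lemma g_sub_eq0 (x y : A) : tadd x (topp y) = tzero -> x = y.
Proof. intros H. rewrite <- (g_oppK y). apply g_opp_unique. rewrite g_comm; exact H. Qed.

Lemma tmuln_S n (x : A) : tmuln A (S n) x = tadd x (tmuln A n x).
Proof. reflexivity. Qed.
Lemma tmuln_0 (x : A) : tmuln A 0 x = tzero.
Proof. reflexivity. Qed.
Lemma tmuln_add a b (x : A) : tmuln A (a + b) x = tadd (tmuln A a x) (tmuln A b x).
Proof.
  induction a; simpl. - rewrite g_0l; reflexivity.
  - rewrite IHa, g_assoc; reflexivity.
Qed.
Lemma tmuln_zero n : tmuln A n tzero = tzero.
Proof. induction n; simpl; [reflexivity| rewrite IHn; apply g_0l]. Qed.
Lemma tmuln_addx n (x y : A) : tmuln A n (tadd x y) = tadd (tmuln A n x) (tmuln A n y).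
Proof.
  induction n; simpl. - rewrite g_0l; reflexivity.
  - rewrite IHn. rewrite <- !g_assoc. f_equal.
    rewrite !g_assoc. f_equal. apply g_comm.
Qed.
Lemma tmuln_mul a b (x : A) : tmuln A (a * b) x = tmuln A a (tmuln A b x).
Proof.
  induction a; simpl. reflexivity.
  rewrite tmuln_add, IHa; reflexivity.
Qed.
Lemma tmuln_opp n (x : A) : tmuln A n (topp x) = topp (tmuln A n x).
Proof.
  apply g_opp_unique. rewrite <- tmuln_addx, g_Nr. apply tmuln_zero.
Qed.
Lemma tmuln_1 (x : A) : tmuln A 1 x = x.
Proof. simpl; apply g_0r. Qed.

Lemma sub_tmuln (M : A -> Prop) : is_subgroup A M -> forall n x, M x -> M (tmuln A n x).
Proof. intros [H0 [Hadd _]] n x Hx; induction n; simpl; auto. Qed.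

Lemma tf_unique : torsion_free A -> forall n (x y : A), (0 < n)%nat ->
  tmuln A n x = tmuln A n y -> x = y.
Proof.
  intros Htf n x y Hn E. apply g_sub_eq0. apply (Htf _ n Hn).
  rewrite tmuln_addx, tmuln_opp, E; apply g_Nr.
Qed.
End Grp.

Lemma ext_pred {T} (P Q : T -> Prop) : (forall x, P x <-> Q x) -> P = Q.
Proof. intros H; extensionality x; apply propositional_extensionality; apply H. Qed.

Lemma open_ext (A : TopAb) (U V : A -> Prop) : (forall x, U x <-> V x) -> topen A U -> topen A V.
Proof. intros H; rewrite (ext_pred U V H); auto. Qed.

Lemma top_iso_refl A : top_iso A A.
Proof.
  exists (fun x => x); repeat split; auto.
  - intros y; exists y; auto.
  - intros U HU; eapply open_ext; [|exact HU]. intros y; split; eauto.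
    intros [x [Hx ->]]; auto.
Qed.

Lemma top_iso_trans A B C : top_iso A B -> top_iso B C -> top_iso A C.
Proof.
  intros [f [fa [fi [fs [fc fo]]]]] [g [ga [gi [gs [gc go]]]]].
  exists (fun x => g (f x)); repeat split.
  - intros x y; rewrite fa, ga; auto.
  - intros x y E; auto.
  - intros z; destruct (gs z) as [y <-]; destruct (fs y) as [x <-]; eauto.
  - intros V HV; apply (fc _ (gc _ HV)).
  - intros U HU. eapply open_ext; [|exact (go _ (fo _ HU))].
    intros z; split.
    + intros [y [[x [Hx <-]] <-]]; eauto.
    + intros [x [Hx <-]]; eauto.
Qed.

Lemma top_iso_sym A B : top_iso A B -> top_iso B A.
Proof.
  intros [f [fa [fi [fs [fc fo]]]]].
  assert (Hg : forall y, {x | f x = y}).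
  { intros y; apply constructive_indefinite_description; auto. }
  set (g := fun y => proj1_sig (Hg y)).
  assert (fg : forall y, f (g y) = y) by (intros y; exact (proj2_sig (Hg y))).
  assert (gf : forall x, g (f x) = x) by (intros x; apply fi; apply fg).
  exists g; repeat split.
  - intros x y; apply fi; rewrite fa, !fg; reflexivity.
  - intros x y E; rewrite <- (fg x), <- (fg y), E; reflexivity.
  - intros x; exists (f x); auto.
  - intros V HV; eapply open_ext; [|exact (fo _ HV)].
    intros y; split.
    + intros [x [Hx <-]]; rewrite gf; auto.
    + intros H; exists (g y); auto.
  - intros U HU; eapply open_ext; [|exact (fc _ HU)].
    intros x; split.
    + intros H; exists (f x); rewrite gf; auto.
    + intros [y [Hy <-]]; rewrite fg; auto.
Qed.

Section Transport.
Variables (A B : TopAb) (f : A -> B).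
Hypothesis fa : forall x y, f (tadd x y) = tadd (f x) (f y).
Hypothesis HB : is_abgroup B.

Lemma hom_tmuln_gen n x : f (tmuln A n x) = tadd (tmuln B n (f x)) (f tzero).
Proof.
  induction n; simpl. - rewrite (g_0l B HB); auto.
  - rewrite fa, IHn, (g_assoc B HB); auto.
Qed.

Hypothesis HA : is_abgroup A.
Lemma hom_zero : f tzero = tzero.
Proof.
  apply (g_cancel_l B HB (f tzero)). rewrite <- fa, (g_0l A HA), (g_0r B HB); auto.
Qed.
Lemma hom_tmuln n x : f (tmuln A n x) = tmuln B n (f x).
Proof. rewrite hom_tmuln_gen, hom_zero, (g_0r B HB); auto. Qed.
Lemma hom_opp x : f (topp x) = topp (f x).
Proof. apply (g_opp_unique B HB). rewrite <- fa, (g_Nr A HA); apply hom_zero. Qed.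
End Transport.

(* weak torsion-freeness, for arbitrary (law-less) TopAb *)
Definition wtf (A : TopAb) : Prop :=
  forall d (z1 z2 : A), (0 < d)%nat -> tmuln A d z1 = tmuln A d z2 -> z1 = z2.

Lemma wtf_of_hom (A B : TopAb) (f : A -> B) :
  (forall x y, f (tadd x y) = tadd (f x) (f y)) -> (forall x y, f x = f y -> x = y) ->
  is_abgroup B -> torsion_free B -> wtf A.
Proof.
  intros fa fi HB Htf d z1 z2 Hd E. apply fi. apply (tf_unique B HB Htf d _ _ Hd).
  apply (g_cancel_l B HB (f tzero)). rewrite !(g_comm B HB (f tzero)).
  rewrite <- !(hom_tmuln_gen A B f fa HB), E; auto.
Qed.

Definition continuous_map (A B : TopAb) (f : A -> B) :=
  forall V, topen B V -> topen A (fun x => V (f x)).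

Lemma iso_of_inverse (A B : TopAb) (f : A -> B) (g : B -> A) :
  (forall x y, f (tadd x y) = tadd (f x) (f y)) ->
  (forall x, g (f x) = x) -> (forall y, f (g y) = y) ->
  continuous_map A B f -> continuous_map B A g -> top_iso A B.
Proof.
  intros fa gf fg fc gc. exists f; repeat split; auto.
  - intros x y E; rewrite <- (gf x), <- (gf y), E; auto.
  - intros y; exists (g y); auto.
  - intros U HU; eapply open_ext; [|exact (gc _ HU)].
    intros y; split. + intros H; exists (g y); auto.
    + intros [x [Hx <-]]; rewrite gf; auto.
Qed.

Lemma box_open (A B : TopAb) (U : A -> Prop) (W : B -> Prop) :
  topen A U -> topen B W -> topen (prodTopAb A B) (fun z => U (fst z) /\ W (snd z)).
Proof.
  intros HU HW z [Hz1 Hz2]. exists U, W; repeat split; auto.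
Qed.

Lemma tmuln_fst (A B : TopAb) n (z : prodTopAb A B) :
  fst (tmuln (prodTopAb A B) n z) = tmuln A n (fst z).
Proof. induction n; simpl; auto. rewrite IHn; auto. Qed.
Lemma tmuln_snd (A B : TopAb) n (z : prodTopAb A B) :
  snd (tmuln (prodTopAb A B) n z) = tmuln B n (snd z).
Proof. induction n; simpl; auto. rewrite IHn; auto. Qed.

Lemma wtf_prod_l A B : wtf (prodTopAb A B) -> wtf A.
Proof.
  intros H d a1 a2 Hd E.
  assert (E2 : ((a1, @tzero B) : prodTopAb A B) = (a2, tzero)).
  { apply (H d _ _ Hd). apply injective_projections.
    - rewrite !tmuln_fst; auto.
    - rewrite !tmuln_snd; auto. }
  congruence.
Qed.
Lemma wtf_prod_r A B : wtf (prodTopAb A B) -> wtf B.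
Proof.
  intros H d a1 a2 Hd E.
  assert (E2 : ((@tzero A, a1) : prodTopAb A B) = (tzero, a2)).
  { apply (H d _ _ Hd). apply injective_projections.
    - rewrite !tmuln_fst; auto.
    - rewrite !tmuln_snd; auto. }
  congruence.
Qed.

Lemma prod_iso A A' B B' : top_iso A A' -> top_iso B B' ->
  top_iso (prodTopAb A B) (prodTopAb A' B').
Proof.
  intros HA HB.
  destruct HA as [f [fa [fi [fs [fc fo]]]]].
  destruct HB as [g [ga [gi [gs [gc go]]]]].
  exists (fun z : prodTopAb A B => ((f (fst z), g (snd z)) : prodTopAb A' B')).
  repeat split.
  - intros x y; simpl; rewrite fa, ga; auto.
  - intros [x1 x2] [y1 y2] E; simpl in E; inversion E; f_equal; auto.
  - intros [y1 y2]. destruct (fs y1) as [x1 <-]; destruct (gs y2) as [x2 <-].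
    exists (x1, x2); auto.
  - intros V HV [x1 x2] Hx. simpl in Hx.
    destruct (HV _ Hx) as [U [W [HU [HW [H1 [H2 H3]]]]]].
    exists (fun a => U (f a)), (fun b => W (g b)); repeat split; auto.
  - intros U HU [y1 y2] [[x1 x2] [Hx E]]. simpl in E; inversion E; subst.
    destruct (HU _ Hx) as [U1 [W1 [HU1 [HW1 [H1 [H2 H3]]]]]].
    exists (fun y => exists x, U1 x /\ f x = y), (fun y => exists x, W1 x /\ g x = y).
    repeat split; auto.
    + simpl; eauto.
    + simpl; eauto.
    + intros a b [x [Hx1 <-]] [x' [Hx2 <-]]. exists (x, x'); split; auto.
Qed.

Lemma prod_assoc A B C :
  top_iso (prodTopAb (prodTopAb A B) C) (prodTopAb A (prodTopAb B C)).
Proof.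
  apply (iso_of_inverse _ _
    (fun z : prodTopAb (prodTopAb A B) C => ((fst (fst z), (snd (fst z), snd z)) : prodTopAb A (prodTopAb B C)))
    (fun z : prodTopAb A (prodTopAb B C) => (((fst z, fst (snd z)), snd (snd z)) : prodTopAb (prodTopAb A B) C))).
  - intros; reflexivity.
  - intros [[a b] c]; reflexivity.
  - intros [a [b c]]; reflexivity.
  - intros V HV [[a b] c] Hz; simpl in Hz.
    destruct (HV _ Hz) as [U1 [W [HU1 [HW [H1 [H2 H3]]]]]]; simpl in *.
    destruct (HW _ H2) as [U2 [U3 [HU2 [HU3 [H4 [H5 H6]]]]]]; simpl in *.
    exists (fun z : prodTopAb A B => U1 (fst z) /\ U2 (snd z)), U3; repeat split; auto.
    + apply box_open; auto.
    + intros [a' b'] c' [Ha Hb] Hc; simpl in *. apply H3; auto.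
  - intros V HV [a [b c]] Hz; simpl in Hz.
    destruct (HV _ Hz) as [W [U3 [HW [HU3 [H1 [H2 H3]]]]]]; simpl in *.
    destruct (HW _ H1) as [U1 [U2 [HU1 [HU2 [H4 [H5 H6]]]]]]; simpl in *.
    exists U1, (fun z : prodTopAb B C => U2 (fst z) /\ U3 (snd z)); repeat split; auto.
    + apply box_open; auto.
    + intros a' [b' c'] Ha [Hb Hc]; simpl in *. apply (H3 (a', b') c'); auto.
Qed.

Definition local_top (B : TopAb) : Prop :=
  forall V : B -> Prop, (forall x, V x -> exists U, topen B U /\ U x /\ forall y, U y -> V y) ->
    topen B V.

Lemma local_top_prod A B : local_top (prodTopAb A B).
Proof.
  intros V H z Hz. destruct (H z Hz) as [U [HU [Uz HUV]]].
  destruct (HU z Uz) as [U1 [W1 [HU1 [HW1 [H1 [H2 H3]]]]]].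
  exists U1, W1; repeat split; auto.
Qed.
Lemma local_top_unit : local_top unitTopAb.
Proof. intros V _; exact I. Qed.
Lemma local_top_bigprod l : local_top (bigprod l).
Proof. destruct l; [apply local_top_unit| apply local_top_prod]. Qed.

Lemma prod_unit_l B : local_top B -> top_iso (prodTopAb unitTopAb B) B.
Proof.
  intros HB.
  apply (iso_of_inverse _ _ (fun z : prodTopAb unitTopAb B => snd z)
     (fun b : B => ((tt, b) : prodTopAb unitTopAb B))).
  - intros; reflexivity.
  - intros [[] b]; reflexivity.
  - intros; reflexivity.
  - intros V HV [[] b] Hb. exists (fun _ => True), V; repeat split; auto.
  - intros V HV. apply HB. intros b Hb. destruct (HV _ Hb) as [U [W [HU [HW [H1 [H2 H3]]]]]].
    exists W; split; [auto|split;[auto|]]. intros y Hy; apply H3; [exact H1|auto].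
Qed.

Lemma prod_unit_r A : local_top A -> top_iso (prodTopAb A unitTopAb) A.
Proof.
  intros HA.
  apply (iso_of_inverse _ _ (fun z : prodTopAb A unitTopAb => fst z)
     (fun a : A => ((a, tt) : prodTopAb A unitTopAb))).
  - intros; reflexivity.
  - intros [a []]; reflexivity.
  - intros; reflexivity.
  - intros V HV [a []] Hb. exists V, (fun _ => True); repeat split; auto.
  - intros V HV. apply HA. intros b Hb. destruct (HV _ Hb) as [U [W [HU [HW [H1 [H2 H3]]]]]].
    exists U; split; [auto|split;[auto|]]. intros y Hy; apply H3; [auto|exact H2].
Qed.

Lemma bigprod_app l1 l2 :
  top_iso (bigprod (l1 ++ l2)) (prodTopAb (bigprod l1) (bigprod l2)).
Proof.
  induction l1 as [|A l1 IH]; simpl.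
  - apply top_iso_sym, prod_unit_l, local_top_bigprod.
  - eapply top_iso_trans; [apply prod_iso; [apply top_iso_refl| exact IH]|].
    apply top_iso_sym, prod_assoc.
Qed.

Lemma abgroup_prod A B : is_abgroup A -> is_abgroup B -> is_abgroup (prodTopAb A B).
Proof.
  intros HA HB; repeat split.
  - intros [] [] []; simpl; f_equal; apply g_assoc; auto.
  - intros [] []; simpl; f_equal; apply g_comm; auto.
  - intros []; simpl; f_equal; apply g_0l; auto.
  - intros []; simpl; f_equal; apply g_Nl; auto.
Qed.
Lemma abgroup_unit : is_abgroup unitTopAb.
Proof. repeat split; simpl; intros; repeat match goal with x : unit |- _ => destruct x end; reflexivity. Qed.

Lemma tf_prod A B : is_abgroup A -> is_abgroup B -> torsion_free A -> torsion_free B ->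
  torsion_free (prodTopAb A B).
Proof.
  intros HA HB TA TB [a b] n Hn E.
  assert (E1 := f_equal fst E); assert (E2 := f_equal snd E).
  rewrite tmuln_fst in E1; rewrite tmuln_snd in E2; simpl in *.
  rewrite (TA _ _ Hn E1), (TB _ _ Hn E2); auto.
Qed.

Lemma trivial_iso_unit A : discrete A -> (forall x : A, x = tzero) -> top_iso A unitTopAb.
Proof.
  intros Hd Ht. exists (fun _ => tt); split; [|split;[|split;[|split]]].
  - intros; reflexivity.
  - intros x y _; rewrite (Ht x), (Ht y); auto.
  - intros []; exists tzero; auto.
  - intros; apply Hd.
  - intros; exact I.
Qed.

Open Scope Z_scope.

Section ZA.
Variables (n : Z) (Hn : 2 <= n).
Notation Z_ := (Zadic n Hn).

Definition zv (x : Z_) (k : nat) : Z := proj1_sig x k.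

Lemma npow_pos' k : 0 < npow n k.
Proof. unfold npow; apply Z.pow_pos_nonneg; lia. Qed.

Lemma zv_range (x : Z_) k : 0 <= zv x k < npow n k.
Proof. apply (proj2_sig x k). Qed.

Lemma Zeq (x y : Z_) : (forall k, zv x k = zv y k) -> x = y.
Proof.
  destruct x as [f Hf], y as [g Hg]; unfold zv; simpl; intros H.
  assert (f = g) by (extensionality k; auto). subst; f_equal; apply proof_irrelevance.
Qed.

Lemma npow_div k j : (k <= j)%nat -> (npow n k | npow n j).
Proof.
  intros H. unfold npow. exists (n ^ (Z.of_nat j - Z.of_nat k)).
  rewrite <- Z.pow_add_r; [f_equal|lia|lia]. lia.
Qed.

Lemma zv_diff (x : Z_) k j : (k <= j)%nat -> (npow n k | zv x j - zv x k).
Proof.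
  induction 1.
  - exists 0; lia.
  - destruct (proj2 (proj2_sig x m)) as [z Hz]. fold (zv x (S m)) (zv x m) in Hz.
    replace (zv x (S m) - zv x k) with ((zv x (S m) - zv x m) + (zv x m - zv x k)) by lia.
    apply Z.divide_add_r; auto. rewrite Hz. apply Z.divide_mul_r, npow_div; auto.
Qed.

Lemma zv_compat (x : Z_) k j : (k <= j)%nat -> zv x j mod npow n k = zv x k.
Proof. intros H; apply Zdivide_mod_minus; [apply zv_range| apply zv_diff; auto]. Qed.

Lemma zv_mono (x y : Z_) k j : (j <= k)%nat -> zv x k = zv y k -> zv x j = zv y j.
Proof. intros H E; rewrite <- (zv_compat x j k), <- (zv_compat y j k), E; auto. Qed.

Lemma zv_add (x y : Z_) k : zv (tadd x y) k = (zv x k + zv y k) mod npow n k.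
Proof. reflexivity. Qed.
Lemma zv_opp (x : Z_) k : zv (topp x) k = (- zv x k) mod npow n k.
Proof. reflexivity. Qed.
Lemma zv_zero k : zv (@tzero Z_) k = 0.
Proof. reflexivity. Qed.

Lemma Zadic_abgroup : is_abgroup Z_.
Proof.
  pose proof npow_pos' as P.
  repeat split.
  - intros x y z; apply Zeq; intros k; rewrite !zv_add.
    rewrite Z.add_mod_idemp_r, Z.add_mod_idemp_l by (specialize (P k); lia). f_equal; lia.
  - intros x y; apply Zeq; intros k; rewrite !zv_add; f_equal; lia.
  - intros x; apply Zeq; intros k; rewrite zv_add, zv_zero; simpl.
    apply Z.mod_small, zv_range.
  - intros x; apply Zeq; intros k; rewrite zv_add, zv_opp, zv_zero.
    rewrite Z.add_mod_idemp_l by (specialize (P k); lia).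
    replace (- zv x k + zv x k) with 0 by lia. apply Z.mod_0_l. specialize (P k); lia.
Qed.

Lemma Zadic_local : local_top Z_.
Proof.
  intros V H x Hx. destruct (H x Hx) as [U [HU [Ux HUV]]].
  destruct (HU x Ux) as [k Hk]. exists k; auto.
Qed.

Lemma cyl_open k (x : Z_) : topen Z_ (fun y => zv y k = zv x k).
Proof. intros y Hy; exists k; intros y' Hy'; unfold zv in *; congruence. Qed.
End ZA.

Section Red.
Variables (n a : Z) (Hn : 2 <= n) (Ha : 2 <= a) (Hdiv : (a | n)).

Lemma npow_divides k : (npow a k | npow n k).
Proof.
  destruct Hdiv as [c Hc]. unfold npow. rewrite Hc, Z.pow_mul_l.
  apply Z.divide_mul_r, Z.divide_refl.
Qed.

Lemma red_ok (x : Zadic n Hn) : Zn_ok a (fun k => zv n Hn x k mod npow a k).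
Proof.
  apply Zn_norm; auto. intros k.
  destruct (zv_diff n Hn x k (S k)) as [z Hz]; [lia|].
  destruct (npow_divides k) as [c Hc].
  exists (z * c). rewrite Hz, Hc; ring.
Qed.

Definition red (x : Zadic n Hn) : Zadic a Ha := exist _ _ (red_ok x).

Lemma zv_red x k : zv a Ha (red x) k = zv n Hn x k mod npow a k.
Proof. reflexivity. Qed.

Lemma red_add x y : red (tadd x y) = tadd (red x) (red y).
Proof.
  apply Zeq; intros k. rewrite zv_red, !zv_add, !zv_red.
  pose proof (npow_pos' a Ha k); pose proof (npow_pos' n Hn k).
  rewrite <- Zmod_div_mod; auto using npow_divides.
  rewrite Z.add_mod by lia. reflexivity.
Qed.

Lemma red_cont : continuous_map _ _ red.
Proof.
  intros V HV x Hx. destruct (HV _ Hx) as [k Hk]. exists k.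
  intros y Hy. apply Hk. fold (zv a Ha (red y) k) (zv a Ha (red x) k).
  rewrite !zv_red. unfold zv; rewrite Hy; auto.
Qed.
End Red.

Section PowIso.
Variables (p : Z) (e : nat) (Hp : 2 <= p) (He : (1 <= e)%nat) (Hn : 2 <= p ^ Z.of_nat e).

Lemma npow_pe k : npow (p ^ Z.of_nat e) k = npow p (e * k).
Proof. unfold npow. rewrite <- Z.pow_mul_r by lia. f_equal; lia. Qed.

Lemma pe_div : (p | p ^ Z.of_nat e).
Proof.
  exists (p ^ (Z.of_nat e - 1)). rewrite <- (Z.pow_1_r p) at 3.
  rewrite <- Z.pow_add_r by lia. f_equal; lia.
Qed.

Lemma lift_ok (y : Zadic p Hp) : Zn_ok (p ^ Z.of_nat e) (fun k => zv p Hp y (e * k)).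
Proof.
  intros k; split.
  - rewrite npow_pe; apply zv_range.
  - destruct (zv_diff p Hp y (e * k) (e * S k)) as [z Hz]; [nia|].
    exists z; rewrite npow_pe; auto.
Qed.
Definition liftp (y : Zadic p Hp) : Zadic (p ^ Z.of_nat e) Hn := exist _ _ (lift_ok y).

Lemma zv_liftp y k : zv _ Hn (liftp y) k = zv p Hp y (e * k).
Proof. reflexivity. Qed.

Lemma pow_iso : top_iso (Zadic (p ^ Z.of_nat e) Hn) (Zadic p Hp).
Proof.
  apply (iso_of_inverse _ _ (red _ _ Hn Hp pe_div) liftp).
  - apply red_add.
  - intros x; apply Zeq; intros k. rewrite zv_liftp, zv_red, <- npow_pe. apply zv_compat; nia.
  - intros y; apply Zeq; intros k. rewrite zv_red, zv_liftp. apply (zv_compat p Hp y); nia.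
  - apply red_cont.
  - intros V HV y Hy. destruct (HV _ Hy) as [k Hk]. exists (e * k)%nat.
    intros y' Hy'. apply Hk; exact Hy'.
Qed.
End PowIso.

Section CRT.
Variables (a b : Z) (Ha : 2 <= a) (Hb : 2 <= b) (Hab : rel_prime a b) (Hn : 2 <= a * b).

Lemma npow_mul k : npow (a * b) k = npow a k * npow b k.
Proof. unfold npow; apply Z.pow_mul_l. Qed.

Lemma rp_pow k : rel_prime (npow a k) (npow b k).
Proof. unfold npow; apply rel_prime_Zpower; auto; lia. Qed.

Lemma crt_div k d : (npow a k | d) -> (npow b k | d) -> (npow (a*b) k | d).
Proof.
  intros [t Ht] Hbd. rewrite Ht, Z.mul_comm in Hbd.
  apply Gauss in Hbd; [|apply rel_prime_sym, rp_pow].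
  destruct Hbd as [s Hs]. rewrite npow_mul, Ht, Hs. exists s; ring.
Qed.

Lemma crt_ex k y z : exists w, 0 <= w < npow (a*b) k /\
  w mod npow a k = y mod npow a k /\ w mod npow b k = z mod npow b k.
Proof.
  pose proof (npow_pos' a Ha k) as Pa; pose proof (npow_pos' b Hb k) as Pb.
  destruct (rel_prime_bezout _ _ (rp_pow k)) as [u v Huv].
  set (w0 := y * v * npow b k + z * u * npow a k).
  exists (w0 mod npow (a*b) k). rewrite npow_mul. split; [apply Z.mod_pos_bound; nia|].
  split.
  - rewrite <- Zmod_div_mod by (try nia; exists (npow b k); ring).
    apply Zdivide_mod_minus; [apply Z.mod_pos_bound; lia|].
    apply (Z.divide_trans _ _ _ (Z.divide_refl _)).
    assert (Hv : v * npow b k = 1 - u * npow a k) by lia.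
    assert (E : w0 - y mod npow a k = (y - y mod npow a k) + npow a k * (- y * u + z * u))
      by (unfold w0; rewrite <- !Z.mul_assoc, Hv; ring).
    rewrite E. apply Z.divide_add_r; [|apply Z.divide_mul_l, Z.divide_refl].
    apply Zmod_divide_minus; auto.
  - rewrite <- Zmod_div_mod by (try nia; exists (npow a k); ring).
    apply Zdivide_mod_minus; [apply Z.mod_pos_bound; lia|].
    assert (Hu : u * npow a k = 1 - v * npow b k) by lia.
    assert (E : w0 - z mod npow b k = (z - z mod npow b k) + npow b k * (y * v - z * v))
      by (unfold w0; rewrite <- !Z.mul_assoc, Hu; ring).
    rewrite E. apply Z.divide_add_r; [|apply Z.divide_mul_l, Z.divide_refl].
    apply Zmod_divide_minus; auto.
Qed.

Definition crt k y z : Z := proj1_sig (constructive_indefinite_description _ (crt_ex k y z)).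
Lemma crt_spec k y z : 0 <= crt k y z < npow (a*b) k /\
  crt k y z mod npow a k = y mod npow a k /\ crt k y z mod npow b k = z mod npow b k.
Proof. unfold crt; destruct constructive_indefinite_description; auto. Qed.

Lemma crt_uniq k w w' : 0 <= w < npow (a*b) k -> 0 <= w' < npow (a*b) k ->
  w mod npow a k = w' mod npow a k -> w mod npow b k = w' mod npow b k -> w = w'.
Proof.
  intros H1 H2 E1 E2.
  pose proof (npow_pos' a Ha k) as Pa; pose proof (npow_pos' b Hb k) as Pb.
  assert (D : (npow (a*b) k | w - w')).
  { apply crt_div; apply Z.mod_divide; try lia; apply Z.cong_iff_0; auto. }
  symmetry; apply Zdivide_mod_minus in D; auto. rewrite Z.mod_small in D; auto.
Qed.

Notation ZN := (Zadic (a*b) Hn).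
Notation PA := (prodTopAb (Zadic a Ha) (Zadic b Hb)).

Lemma div_ab_a : (a | a * b). Proof. exists b; ring. Qed.
Lemma div_ab_b : (b | a * b). Proof. exists a; ring. Qed.

Definition crt_f (x : ZN) : PA := (red _ _ Hn Ha div_ab_a x, red _ _ Hn Hb div_ab_b x).

Lemma crtg_ok (yz : PA) : Zn_ok (a*b) (fun k => crt k (zv a Ha (fst yz) k) (zv b Hb (snd yz) k)).
Proof.
  intros k; split; [apply crt_spec|].
  pose proof (npow_pos' a Ha k) as Pa; pose proof (npow_pos' b Hb k) as Pb.
  destruct (crt_div k (crt (S k) (zv a Ha (fst yz) (S k)) (zv b Hb (snd yz) (S k)) -
                       crt k (zv a Ha (fst yz) k) (zv b Hb (snd yz) k))) as [z Hz].
  3: exists z; exact Hz.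
  - apply Z.mod_divide; [lia|]. apply Z.cong_iff_0.
    pose proof (npow_pos' a Ha (S k)) as Pa'.
    destruct (crt_spec k (zv a Ha (fst yz) k) (zv b Hb (snd yz) k)) as [_ [E1 _]].
    destruct (crt_spec (S k) (zv a Ha (fst yz) (S k)) (zv b Hb (snd yz) (S k))) as [_ [E2 _]].
    rewrite E1, (Zmod_div_mod (npow a k) (npow a (S k)) (crt (S k) _ _)) by (auto using npow_div; lia).
    rewrite E2, (Z.mod_small (zv a Ha (fst yz) (S k))) by apply zv_range.
    rewrite (zv_compat a Ha (fst yz) k (S k)) by lia. rewrite Z.mod_small by apply zv_range; reflexivity.
  - apply Z.mod_divide; [lia|]. apply Z.cong_iff_0.
    pose proof (npow_pos' b Hb (S k)) as Pb'.
    destruct (crt_spec k (zv a Ha (fst yz) k) (zv b Hb (snd yz) k)) as [_ [_ E1]].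
    destruct (crt_spec (S k) (zv a Ha (fst yz) (S k)) (zv b Hb (snd yz) (S k))) as [_ [_ E2]].
    rewrite E1, (Zmod_div_mod (npow b k) (npow b (S k)) (crt (S k) _ _)) by (auto using npow_div; lia).
    rewrite E2, (Z.mod_small (zv b Hb (snd yz) (S k))) by apply zv_range.
    rewrite (zv_compat b Hb (snd yz) k (S k)) by lia. rewrite Z.mod_small by apply zv_range; reflexivity.
Qed.

Definition crt_g (yz : PA) : ZN := exist _ _ (crtg_ok yz).

Lemma crt_iso : top_iso ZN PA.
Proof.
  apply (iso_of_inverse _ _ crt_f crt_g).
  - intros x y; unfold crt_f; rewrite !red_add; reflexivity.
  - intros x; apply Zeq; intros k. unfold crt_g, zv at 1; simpl.
    fold (zv (a*b) Hn x k). idtac.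
    pose proof (npow_pos' a Ha k) as Pa; pose proof (npow_pos' b Hb k) as Pb.
    destruct (crt_spec k (zv (a*b) Hn x k mod npow a k) (zv (a*b) Hn x k mod npow b k))
      as [R1 [R2 R3]].
    apply crt_uniq with k; auto; [apply zv_range| |].
    + rewrite R2, Z.mod_mod; lia.
    + rewrite R3, Z.mod_mod; lia.
  - intros [y z]; unfold crt_f; f_equal; apply Zeq; intros k; rewrite zv_red;
      unfold crt_g, zv at 1; simpl.
    + destruct (crt_spec k (zv a Ha y k) (zv b Hb z k)) as [_ [-> _]].
      apply Z.mod_small, zv_range.
    + destruct (crt_spec k (zv a Ha y k) (zv b Hb z k)) as [_ [_ ->]].
      apply Z.mod_small, zv_range.
  - intros V HV x Hx. destruct (HV _ Hx) as [U [W [HU [HW [H1 [H2 H3]]]]]].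
    destruct (HU _ H1) as [k1 Hk1]; destruct (HW _ H2) as [k2 Hk2].
    exists (Nat.max k1 k2). intros x' E.
    change (V (fst (crt_f x'), snd (crt_f x'))). apply H3; [apply Hk1|apply Hk2];
      cbn [fst snd crt_f red proj1_sig]; f_equal;
      apply (zv_mono (a*b) Hn x' x (Nat.max k1 k2)); auto; lia.
  - intros V HV [y z] Hx. destruct (HV _ Hx) as [k Hk].
    exists (fun y' => zv a Ha y' k = zv a Ha y k), (fun z' => zv b Hb z' k = zv b Hb z k).
    repeat split; try apply cyl_open.
    intros y' z' E1 E2. apply Hk. simpl. rewrite E1, E2; reflexivity.
Qed.
End CRT.

Lemma Zadic_eq_iso n m (H1 : 2 <= n) (H2 : 2 <= m) : n = m -> top_iso (Zadic n H1) (Zadic m H2).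
Proof. intros ->. rewrite (proof_irrelevance _ H1 H2). apply top_iso_refl. Qed.

Definition Zp (s : {p : Z | prime p}) : TopAb := Zadic (proj1_sig s) (prime_ge_2 _ (proj2_sig s)).

Lemma prime_divisor_aux (N : nat) : forall n, 2 <= n -> (Z.to_nat n <= N)%nat ->
  exists p, prime p /\ (p | n).
Proof.
  induction N; intros n H1 H2; [lia|].
  destruct (prime_dec n) as [Hp|Hp]; [exists n; split; auto; apply Z.divide_refl|].
  destruct (not_prime_divide n) as [d [Hd Hdn]]; auto; [lia|].
  destruct (IHN d) as [p [Hp' Hpd]]; try lia.
  exists p; split; auto. eapply Z.divide_trans; eauto.
Qed.

Lemma split_pp_aux (N : nat) p : prime p -> forall n, 1 <= n -> (Z.to_nat n <= N)%nat -> (p | n) ->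
  exists e b, (1 <= e)%nat /\ n = p ^ Z.of_nat e * b /\ 1 <= b /\ ~ (p | b).
Proof.
  intros Hp. pose proof (prime_ge_2 _ Hp) as P2.
  induction N; intros n H1 H2 [m Hm]; [lia|].
  assert (Hm1 : 1 <= m) by nia.
  destruct (classic (p | m)) as [Hpm|Hpm].
  - destruct (IHN m) as [e [b [He [Eb [Hb Hpb]]]]]; auto; try nia.
    exists (S e), b; repeat split; auto; try lia.
    rewrite Hm, Eb, Nat2Z.inj_succ, Z.pow_succ_r by lia. ring.
  - exists 1%nat, m; split; [lia|split;[rewrite Hm; change (Z.of_nat 1) with 1; rewrite Z.pow_1_r; ring|split;[lia|auto]]].
Qed.

Lemma Zadic_factor_aux (N : nat) : forall n (Hn : 2 <= n), (Z.to_nat n <= N)%nat ->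
  exists ps, top_iso (Zadic n Hn) (bigprod (map Zp ps)).
Proof.
  induction N; intros n Hn HN; [lia|].
  destruct (prime_divisor_aux (Z.to_nat n) n Hn (le_n _)) as [p [Hp Hpn]].
  pose proof (prime_ge_2 _ Hp) as P2.
  destruct (split_pp_aux (Z.to_nat n) p Hp n ltac:(lia) (le_n _) Hpn) as [e [b [He [Eb [Hb Hpb]]]]].
  assert (Hpe : 2 <= p ^ Z.of_nat e).
  { apply Z.le_trans with (p ^ 1); [lia|]. apply Z.pow_le_mono_r; lia. }
  set (s := exist (fun p => prime p) p Hp).
  assert (Is : top_iso (Zadic (p ^ Z.of_nat e) Hpe) (Zp s)).
  { eapply top_iso_trans; [apply (pow_iso p e P2 He Hpe)|]. apply Zadic_eq_iso; reflexivity. }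
  destruct (Z.eq_dec b 1) as [Hb1|Hb1].
  - exists (s :: nil). eapply top_iso_trans; [apply (Zadic_eq_iso n (p ^ Z.of_nat e) Hn Hpe); rewrite Eb, Hb1; ring|].
    eapply top_iso_trans; [exact Is|]. simpl.
    apply top_iso_sym, prod_unit_r, Zadic_local.
  - assert (Hb2 : 2 <= b) by lia.
    destruct (IHN b Hb2) as [ps Hps]; [nia|].
    exists (s :: ps).
    assert (Hrp : rel_prime (p ^ Z.of_nat e) b).
    { apply rel_prime_sym, rel_prime_Zpower_r; [lia|]. apply rel_prime_sym, prime_rel_prime; auto. }
    assert (Hn' : 2 <= p ^ Z.of_nat e * b) by nia.
    eapply top_iso_trans; [apply (Zadic_eq_iso n _ Hn Hn' Eb)|].
    eapply top_iso_trans; [apply (crt_iso _ _ Hpe Hb2 Hrp Hn')|].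
    simpl. apply prod_iso; auto.
Qed.

Lemma Zadic_factor n (Hn : 2 <= n) : exists ps, top_iso (Zadic n Hn) (bigprod (map Zp ps)).
Proof. apply (Zadic_factor_aux (Z.to_nat n)); auto. Qed.

Close Scope Z_scope.

Lemma finite_wtf_trivial (A : TopAb) : is_abgroup A -> finite_car A -> wtf A ->
  forall x : A, x = tzero.
Proof.
  intros HA [l Hl] Hw x.
  set (N := length l). set (f := fun i => tmuln A i x).
  assert (Hex : exists i j, (i < j <= N)%nat /\ f i = f j).
  { apply NNPP; intros Hno.
    assert (ND : NoDup (map f (seq 0 (S N)))).
    { apply NoDup_map_NoDup_ForallPairs; [|apply seq_NoDup].
      intros i j Hi Hj E. apply in_seq in Hi; apply in_seq in Hj.
      destruct (Nat.lt_total i j) as [H|[H|H]]; auto.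
      - exfalso; apply Hno; exists i, j; split; [lia|auto].
      - exfalso; apply Hno; exists j, i; split; [lia|auto]. }
    apply NoDup_incl_length with (l' := l) in ND.
    - rewrite length_map, length_seq in ND. unfold N in ND; lia.
    - intros y _; apply Hl. }
  destruct Hex as [i [j [Hij E]]].
  assert (Hd : tmuln A (j - i) x = tzero).
  { apply (g_cancel_l A HA (tmuln A i x)). rewrite (g_0r A HA).
    rewrite <- (tmuln_add A HA). replace (i + (j - i))%nat with j by lia.
    unfold f in E; symmetry; exact E. }
  apply (Hw (j - i)%nat); [lia|]. rewrite Hd, tmuln_zero; auto.
Qed.

Lemma adic_reduce l : Forall adic_factor l -> wtf (bigprod l) ->
  exists ps, top_iso (bigprod l) (bigprod (map Zp ps)).
Proof.
  induction 1 as [|A l HA Hl IH]; intros Hw.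
  - exists nil; apply top_iso_refl.
  - simpl in Hw. destruct (IH (wtf_prod_r _ _ Hw)) as [ps Hps].
    pose proof (wtf_prod_l _ _ Hw) as HwA.
    destruct HA as [[HgA [Hfin Hdisc]]|[n [Hn HiA]]].
    + exists ps. simpl.
      eapply top_iso_trans; [apply prod_iso; [|exact Hps]|].
      * apply trivial_iso_unit; auto. apply finite_wtf_trivial; auto.
      * apply prod_unit_l, local_top_bigprod.
    + destruct (Zadic_factor n Hn) as [qs Hqs].
      exists (qs ++ ps). simpl.
      eapply top_iso_trans; [apply prod_iso; [eapply top_iso_trans; [exact HiA|exact Hqs]|exact Hps]|].
      rewrite map_app. apply top_iso_sym, bigprod_app.
Qed.

Definition inter_closed (A : TopAb) : Prop :=
  forall U V, topen A U -> topen A V -> topen A (fun x => U x /\ V x).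

Definition good (A : TopAb) : Prop :=
  is_abgroup A /\ local_top A /\ inter_closed A /\ sub_continuous A.

Lemma translate_open A : good A -> forall U, topen A U -> forall c : A,
  topen A (fun z => U (tadd c z)).
Proof.
  intros [HA [HL [HI HS]]] U HU c. apply HL. intros z Hz.
  assert (E : forall a, tadd a (topp (topp c)) = tadd c a).
  { intros a; rewrite (g_oppK A HA), (g_comm A HA); auto. }
  destruct (HS U HU z (topp c)) as [V [W [HV [HW [Vz [Wc H]]]]]]; [rewrite E; auto|].
  exists V; repeat split; auto. intros a Ha. rewrite <- E. apply H; auto.
Qed.

Lemma sub_eq (A : TopAb) (M : A -> Prop) (HM : is_subgroup A M) (z1 z2 : subTopAb A M HM) :
  proj1_sig z1 = proj1_sig z2 -> z1 = z2.
Proof.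
  destruct z1 as [x1 p1], z2 as [x2 p2]; simpl; intros ->. f_equal; apply proof_irrelevance.
Qed.

Lemma sub_abgroup A M HM : is_abgroup A -> is_abgroup (subTopAb A M HM).
Proof.
  intros HA; repeat split; intros; apply sub_eq; simpl.
  - apply g_assoc; auto. - apply g_comm; auto. - apply g_0l; auto. - apply g_Nl; auto.
Qed.

Lemma sub_val_tmuln A M HM n (z : subTopAb A M HM) :
  proj1_sig (tmuln _ n z) = tmuln A n (proj1_sig z).
Proof. induction n; simpl; auto. rewrite IHn; auto. Qed.

Lemma iso_inverse A B : top_iso A B -> exists (f : A -> B) (g : B -> A),
  (forall x y, f (tadd x y) = tadd (f x) (f y)) /\ (forall x y, g (tadd x y) = tadd (g x) (g y)) /\
  (forall x, g (f x) = x) /\ (forall y, f (g y) = y) /\ continuous_map A B f /\ continuous_map B A g.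
Proof.
  intros Hiso. pose proof (top_iso_sym _ _ Hiso) as Hinv.
  destruct Hiso as [f [fa [fi [fs [fc fo]]]]].
  assert (Hg : forall y, {x | f x = y}).
  { intros y; apply constructive_indefinite_description; auto. }
  set (g := fun y => proj1_sig (Hg y)).
  assert (fg : forall y, f (g y) = y) by (intros y; exact (proj2_sig (Hg y))).
  assert (gf : forall x, g (f x) = x) by (intros x; apply fi; apply fg).
  exists f, g; repeat split; auto.
  - intros x y; apply fi; rewrite fa, !fg; reflexivity.
  - intros V HV; eapply open_ext; [|exact (fo _ HV)].
    intros y; split.
    + intros [x [Hx <-]]; rewrite gf; auto.
    + intros H; exists (g y); auto.
Qed.

Section Half.
Variables (G T : TopAb) (M : G -> Prop) (N : T -> Prop)
  (HM : is_subgroup G M) (HN : is_subgroup T N).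
Hypotheses (GG : good G) (GT : good T) (MO : topen G M) (NO : topen T N).
Variable f : subTopAb G M HM -> subTopAb T N HN.
Hypotheses (fa : forall x y, f (tadd x y) = tadd (f x) (f y)) (fc : continuous_map _ _ f).
Variable s : nat -> nat.
Hypotheses (spos : forall k, (0 < s k)%nat) (sdiv : forall k k', (k <= k')%nat -> exists c, s k' = (c * s k)%nat).
Hypothesis (Gtors : forall x : G, exists k, M (tmuln G (s k) x)).
Hypothesis (Tdiv : forall t : T, N t -> forall k, exists y, tmuln T (s k) y = t).
Hypothesis (Ttf : torsion_free T).

Let HG := proj1 GG.
Let HT := proj1 GT.

Definition Fv (m : G) (H : M m) : T := proj1_sig (f (exist _ m H)).

Lemma Fv_irr m H H' : Fv m H = Fv m H'.
Proof. rewrite (proof_irrelevance _ H H'); auto. Qed.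

Lemma Fv_N m H : N (Fv m H).
Proof. unfold Fv; destruct (f (exist _ m H)); auto. Qed.

Lemma Fv_add m m' H H' H'' : Fv (tadd m m') H'' = tadd (Fv m H) (Fv m' H').
Proof.
  unfold Fv.
  assert (E : (exist (fun x => M x) (tadd m m') H'' : subTopAb G M HM) =
    tadd (exist (fun x => M x) m H : subTopAb G M HM) (exist (fun x => M x) m' H'))
    by (apply sub_eq; reflexivity).
  rewrite E, fa; reflexivity.
Qed.

Lemma Fv_tmuln c m H H' : Fv (tmuln G c m) H' = tmuln T c (Fv m H).
Proof.
  unfold Fv.
  assert (E : (exist (fun x => M x) (tmuln G c m) H' : subTopAb G M HM) =
    tmuln (subTopAb G M HM) c (exist (fun x => M x) m H))
    by (apply sub_eq; rewrite sub_val_tmuln; reflexivity).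
  rewrite E, (hom_tmuln _ _ f fa (sub_abgroup _ _ _ HT) (sub_abgroup _ _ _ HG)).
  rewrite sub_val_tmuln; auto.
Qed.

Definition kx (x : G) : nat := proj1_sig (constructive_indefinite_description _ (Gtors x)).
Lemma kx_spec x : M (tmuln G (s (kx x)) x).
Proof. unfold kx; destruct constructive_indefinite_description; auto. Qed.

Definition Phi (x : G) : T :=
  proj1_sig (constructive_indefinite_description _ (Tdiv _ (Fv_N _ (kx_spec x)) (kx x))).
Lemma Phi_spec0 x : tmuln T (s (kx x)) (Phi x) = Fv _ (kx_spec x).
Proof. unfold Phi; destruct constructive_indefinite_description; auto. Qed.

Lemma Fv_eq m m' H H' : m = m' -> Fv m H = Fv m' H'.
Proof. intros ->; apply Fv_irr. Qed.

Lemma Phi_spec x k (H : M (tmuln G (s k) x)) : tmuln T (s k) (Phi x) = Fv _ H.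
Proof.
  set (K := Nat.max k (kx x)).
  destruct (sdiv k K) as [c Hc]; [lia|]. destruct (sdiv (kx x) K) as [c0 Hc0]; [lia|].
  assert (HcP : (0 < c)%nat) by (pose proof (spos K); pose proof (spos k); nia).
  apply (tf_unique T HT Ttf c); auto.
  assert (H1 : M (tmuln G c (tmuln G (s k) x))) by (apply sub_tmuln; auto).
  assert (H2 : M (tmuln G c0 (tmuln G (s (kx x)) x))) by (apply sub_tmuln; auto; apply kx_spec).
  rewrite <- (Fv_tmuln c _ H H1).
  rewrite <- (tmuln_mul T HT), <- Hc, Hc0, (tmuln_mul T HT), Phi_spec0.
  rewrite <- (Fv_tmuln c0 _ (kx_spec x) H2).
  apply Fv_eq. rewrite <- !(tmuln_mul G HG), <- Hc, <- Hc0; auto.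
Qed.

Lemma Phi_uniq x k (H : M (tmuln G (s k) x)) y : tmuln T (s k) y = Fv _ H -> Phi x = y.
Proof.
  intros E. apply (tf_unique T HT Ttf (s k)); auto. rewrite E; apply Phi_spec.
Qed.

Lemma Phi_add x x' : Phi (tadd x x') = tadd (Phi x) (Phi x').
Proof.
  set (K := Nat.max (kx x) (kx x')).
  destruct (sdiv (kx x) K) as [c Hc]; [lia|]. destruct (sdiv (kx x') K) as [c' Hc']; [lia|].
  assert (H1 : M (tmuln G (s K) x)).
  { rewrite Hc, (tmuln_mul G HG); apply sub_tmuln; auto; apply kx_spec. }
  assert (H2 : M (tmuln G (s K) x')).
  { rewrite Hc', (tmuln_mul G HG); apply sub_tmuln; auto; apply kx_spec. }
  assert (H3 : M (tmuln G (s K) (tadd x x'))).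
  { rewrite (tmuln_addx G HG). apply HM; auto. }
  apply (Phi_uniq _ _ H3). rewrite (tmuln_addx T HT), (Phi_spec _ _ H1), (Phi_spec _ _ H2).
  rewrite <- (Fv_add _ _ H1 H2 (proj1 (proj2 HM) _ _ H1 H2)). apply Fv_eq.
  rewrite (tmuln_addx G HG); auto.
Qed.

Lemma Phi_restr m (H : M m) : Phi m = Fv m H.
Proof.
  assert (H0 : M (tmuln G (s 0) m)) by (apply sub_tmuln; auto).
  apply (Phi_uniq _ _ H0). rewrite <- (Fv_tmuln (s 0) m H H0); auto.
Qed.

Lemma Fv_zero H : Fv tzero H = tzero.
Proof.
  unfold Fv.
  assert (E : (exist (fun x => M x) tzero H : subTopAb G M HM) = tzero) by (apply sub_eq; reflexivity).
  rewrite E, (hom_zero _ _ f fa (sub_abgroup _ _ _ HT) (sub_abgroup _ _ _ HG)). reflexivity.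
Qed.

Lemma Phi_cont : continuous_map G T Phi.
Proof.
  pose proof GG as [_ [GL [GI GS]]].
  intros V HV. apply GL. intros x Hx.
  set (S := fun t => V (tadd (Phi x) t)).
  assert (HS : topen T S) by (apply translate_open; auto).
  destruct (fc (fun n => S (proj1_sig n))) as [U0 [HU0 EU0]]; [exists S; split; auto; tauto|].
  exists (fun y => U0 (tadd (topp x) y) /\ M (tadd (topp x) y)). repeat split.
  - apply (translate_open G GG (fun z => U0 z /\ M z)); auto.
  - rewrite (g_Nl G HG). pose proof (proj1 HM) as HM0.
    apply (proj1 (EU0 (exist _ tzero HM0))). simpl. fold (Fv tzero HM0).
    unfold S. rewrite Fv_zero, (g_0r T HT); auto.
  - rewrite (g_Nl G HG). apply HM.
  - intros y [Hy1 Hy2].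
    apply (proj2 (EU0 (exist _ _ Hy2))) in Hy1. simpl in Hy1. fold (Fv _ Hy2) in Hy1.
    unfold S in Hy1. rewrite <- Phi_restr, <- Phi_add in Hy1.
    rewrite (g_assoc G HG), (g_Nr G HG), (g_0l G HG) in Hy1; auto.
Qed.
End Half.

Theorem ATL (G T : TopAb) (M : G -> Prop) (N : T -> Prop)
  (HM : is_subgroup G M) (HN : is_subgroup T N) (s : nat -> nat) :
  good G -> good T -> topen G M -> topen T N ->
  top_iso (subTopAb G M HM) (subTopAb T N HN) ->
  (forall k, (0 < s k)%nat) -> (forall k k', (k <= k')%nat -> exists c, s k' = (c * s k)%nat) ->
  (forall x : G, exists k, M (tmuln G (s k) x)) ->
  (forall t : T, exists k, N (tmuln T (s k) t)) ->
  (forall x : G, M x -> forall k, exists y, tmuln G (s k) y = x) ->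
  (forall t : T, N t -> forall k, exists y, tmuln T (s k) y = t) ->
  torsion_free G -> torsion_free T ->
  top_iso G T.
Proof.
  intros GG GT MO NO Hiso spos sdiv Gt Tt Gd Td Gtf Ttf.
  destruct (iso_inverse _ _ Hiso) as [f [g [fa [ga [gf [fg [fc gc]]]]]]].
  set (Phi1 := Phi G T M N HM HN f s Gt Td).
  set (Psi1 := Phi T G N M HN HM g s Tt Gd).
  assert (HG := proj1 GG). assert (HT := proj1 GT).
  apply (iso_of_inverse G T Phi1 Psi1).
  - apply (Phi_add G T M N HM HN GG GT f fa s spos sdiv Gt Td Ttf).
  - intros x. destruct (Gt x) as [k Hk].
    assert (Hk' : N (tmuln T (s k) (Phi1 x))).
    { unfold Phi1; rewrite (Phi_spec G T M N HM HN GG GT f fa s spos sdiv Gt Td Ttf x k Hk).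
      apply Fv_N. }
    apply (Phi_uniq T G N M HN HM GT GG g ga s spos sdiv Tt Gd Gtf _ k Hk').
    unfold Fv.
    assert (E : (exist (fun x => N x) (tmuln T (s k) (Phi1 x)) Hk' : subTopAb T N HN) =
                f (exist (fun x => M x) _ Hk)).
    { apply sub_eq. simpl. unfold Phi1; rewrite (Phi_spec G T M N HM HN GG GT f fa s spos sdiv Gt Td Ttf x k Hk).
      reflexivity. }
    rewrite E, gf; reflexivity.
  - intros t. destruct (Tt t) as [k Hk].
    assert (Hk' : M (tmuln G (s k) (Psi1 t))).
    { unfold Psi1; rewrite (Phi_spec T G N M HN HM GT GG g ga s spos sdiv Tt Gd Gtf t k Hk).
      apply Fv_N. }
    apply (Phi_uniq G T M N HM HN GG GT f fa s spos sdiv Gt Td Ttf _ k Hk').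
    unfold Fv.
    assert (E : (exist (fun x => M x) (tmuln G (s k) (Psi1 t)) Hk' : subTopAb G M HM) =
                g (exist (fun x => N x) _ Hk)).
    { apply sub_eq. simpl. unfold Psi1; rewrite (Phi_spec T G N M HN HM GT GG g ga s spos sdiv Tt Gd Gtf t k Hk).
      reflexivity. }
    rewrite E, fg; reflexivity.
  - apply (Phi_cont G T M N HM HN GG GT MO f fa fc s spos sdiv Gt Td Ttf).
  - apply (Phi_cont T G N M HN HM GT GG NO g ga gc s spos sdiv Tt Gd Gtf).
Qed.

Lemma good_of_LCA G : is_LCA G -> good G.
Proof.
  intros [HA [[HT1 [HT2 HT3]] [HS _]]]. split; [exact HA|split; [|split; [exact HT2|exact HS]]].
  intros V HV.
  eapply open_ext; [|apply (HT3 (fun U => topen G U /\ forall y, U y -> V y))].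
  - intros x; split.
    + intros [U [[_ HU] Ux]]; auto.
    + intros Vx. destruct (HV x Vx) as [U [HU [Ux HUV]]]. exists U; auto.
  - intros U [HU _]; auto.
Qed.

Lemma fact_div k k' : (k <= k')%nat -> exists c, fact k' = (c * fact k)%nat.
Proof.
  induction 1. - exists 1%nat; lia.
  - destruct IHle as [c Hc]. exists (S m * c)%nat. simpl fact. rewrite Hc; lia.
Qed.

Lemma n_div_fact n : (0 < n)%nat -> exists c, fact n = (c * n)%nat.
Proof. intros H; destruct n; [lia|]. exists (fact n). simpl; lia. Qed.

Lemma g_swap4 (A : TopAb) (HA : is_abgroup A) (a b c d : A) :
  tadd (tadd a b) (tadd c d) = tadd (tadd a c) (tadd b d).
Proof.
  rewrite <- !(g_assoc A HA). f_equal. rewrite !(g_assoc A HA). f_equal. apply (g_comm A HA).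
Qed.

Section Tors.
Variables (G : TopAb) (M : G -> Prop) (HM : is_subgroup G M) (HA : is_abgroup G).

Lemma artinian_torsion : quotient_artinian G M ->
  forall x, exists n, (0 < n)%nat /\ M (tmuln G n x).
Proof.
  intros Hart x. apply NNPP; intros Hno. apply Hart.
  set (H := fun i y => exists m a b, M m /\
            y = tadd m (tadd (tmuln G (a * 2 ^ i) x) (topp (tmuln G (b * 2 ^ i) x)))).
  destruct HM as [HM0 [HMadd HMopp]].
  exists H. split; [intros i; split|intros i; split].
  - repeat split.
    + exists tzero, 0%nat, 0%nat; split; auto. simpl. rewrite g_opp0, !g_0l; auto.
    + intros y y' [m [a [b [Hm ->]]]] [m' [a' [b' [Hm' ->]]]].
      exists (tadd m m'), (a + a')%nat, (b + b')%nat; split; auto.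
      rewrite !Nat.mul_add_distr_r, !(tmuln_add G HA), (g_oppD G HA).
      set (A := tmuln G (a * 2 ^ i) x); set (A' := tmuln G (a' * 2 ^ i) x).
      set (B := topp (tmuln G (b * 2 ^ i) x)); set (B' := topp (tmuln G (b' * 2 ^ i) x)).
      rewrite (g_swap4 G HA m), (g_swap4 G HA A); auto.
    + intros y [m [a [b [Hm ->]]]]. exists (topp m), b, a; split; auto.
      rewrite !(g_oppD G HA), (g_oppK G HA). f_equal; apply (g_comm G HA).
  - intros y Hy. exists y, 0%nat, 0%nat; split; auto. simpl. rewrite g_opp0, !g_0r; auto.
  - intros y [m [a [b [Hm ->]]]]. exists m, (2 * a)%nat, (2 * b)%nat; split; auto.
    rewrite Nat.pow_succ_r', !Nat.mul_assoc, !(Nat.mul_comm _ 2). reflexivity.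
  - set (u := tmuln G (2 ^ i) x).
    exists u. split.
    + exists tzero, 1%nat, 0%nat; split; auto. simpl. rewrite g_opp0, g_0l, !g_0r, Nat.add_0_r; auto.
    + intros [m [a [b [Hm E]]]].
      assert (EA : tmuln G (a * 2 ^ S i) x = tmuln G (2 * a) u).
      { unfold u; rewrite <- (tmuln_mul G HA). f_equal. rewrite Nat.pow_succ_r'; lia. }
      assert (EB : tmuln G (b * 2 ^ S i) x = tmuln G (2 * b) u).
      { unfold u; rewrite <- (tmuln_mul G HA). f_equal. rewrite Nat.pow_succ_r'; lia. }
      rewrite EA, EB in E.
      set (A := tmuln G (2 * a) u) in *. set (B := tmuln G (2 * b) u) in *.
      assert (E2 : tmuln G (1 + 2 * b) u = tadd m A).
      { rewrite (tmuln_add G HA), (tmuln_1 G HA). fold B. rewrite E.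
        rewrite <- !(g_assoc G HA), (g_Nl G HA), (g_0r G HA); auto. }
      destruct (Nat.lt_total (2 * a) (1 + 2 * b)) as [Hlt|[Heq|Hgt]]; [|lia|].
      * apply Hno. exists ((1 + 2 * b - 2 * a) * 2 ^ i)%nat. split.
        { pose proof (Nat.pow_nonzero 2 i); nia. }
        rewrite (tmuln_mul G HA). fold u.
        replace (1 + 2 * b)%nat with ((1 + 2 * b - 2 * a) + 2 * a)%nat in E2 by lia.
        rewrite (tmuln_add G HA) in E2. fold A in E2.
        rewrite !(g_comm G HA _ A) in E2. apply (g_cancel_l G HA) in E2. rewrite E2; auto.
      * apply Hno. exists ((2 * a - (1 + 2 * b)) * 2 ^ i)%nat. split.
        { pose proof (Nat.pow_nonzero 2 i); nia. }
        rewrite (tmuln_mul G HA). fold u.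
        assert (E3 : A = tadd (tmuln G (2 * a - (1 + 2 * b)) u) (tmuln G (1 + 2 * b) u)).
        { unfold A; rewrite <- (tmuln_add G HA). f_equal; lia. }
        rewrite E2 in E3.
        assert (E4 : tadd (tmuln G (2 * a - (1 + 2 * b)) u) m = tzero).
        { assert (E5 : tadd A (tadd (tmuln G (2 * a - (1 + 2 * b)) u) m) = tadd A tzero).
          { rewrite (g_0r G HA), (g_comm G HA A), <- (g_assoc G HA). symmetry; exact E3. }
          apply (g_cancel_l G HA A); exact E5. }
        rewrite (g_opp_unique G HA _ _ (eq_trans (g_comm G HA _ _) E4)). auto.
Qed.

Lemma artinian_fact : quotient_artinian G M -> forall x, exists k, M (tmuln G (fact k) x).
Proof.
  intros Hart x. destruct (artinian_torsion Hart x) as [n [Hn Hm]].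
  exists n. destruct (n_div_fact n Hn) as [c Hc]. rewrite Hc, (tmuln_mul G HA).
  apply sub_tmuln; auto.
Qed.
End Tors.

Open Scope R_scope.

Lemma Int_part_IZR z : Int_part (IZR z) = z.
Proof. symmetry; apply Int_part_spec; lra. Qed.

Lemma modR_unique x m y z : 0 < m -> 0 <= y < m -> y = x + IZR z * m -> modR x m = y.
Proof.
  intros Hm Hy E. unfold modR.
  assert (Hq : (- z)%Z = Int_part (x / m)).
  { apply Int_part_spec. rewrite opp_IZR.
    assert (Ex : x / m = y / m - IZR z) by (rewrite E; field; lra).
    rewrite Ex. assert (0 <= y / m < 1).
    { split. - apply Rmult_le_pos; [lra| left; apply Rinv_0_lt_compat; lra].
      - apply (Rmult_lt_reg_r m); [lra|]. unfold Rdiv; rewrite Rmult_assoc, Rinv_l; lra. }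
    lra. }
  rewrite <- Hq, opp_IZR. lra.
Qed.

Lemma modR_spec x m : exists z, modR x m = x + IZR z * m.
Proof. exists (- Int_part (x / m))%Z. unfold modR; rewrite opp_IZR; ring. Qed.

Lemma modR_shift x m z : 0 < m -> modR (x + IZR z * m) m = modR x m.
Proof.
  intros Hm. destruct (modR_spec x m) as [q Hq].
  apply modR_unique with (q - z)%Z; auto. apply modR_bound; auto.
  rewrite Hq, minus_IZR; ring.
Qed.

Lemma modR_small x m : 0 <= x < m -> modR x m = x.
Proof. intros H. apply modR_unique with 0%Z; auto; lra. Qed.

Lemma modR_addl x c m : 0 < m -> modR (modR x m + c) m = modR (x + c) m.
Proof.
  intros Hm. destruct (modR_spec x m) as [q Hq]. rewrite Hq.
  replace (x + IZR q * m + c) with ((x + c) + IZR q * m) by ring. apply modR_shift; auto.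
Qed.

Lemma modR_IZR a m : (0 < m)%Z -> modR (IZR a) (IZR m) = IZR (a mod m).
Proof.
  intros Hm. apply modR_unique with (- (a / m))%Z.
  - apply IZR_lt; auto.
  - pose proof (Z.mod_pos_bound a m Hm). split; [apply IZR_le|apply IZR_lt]; lia.
  - rewrite <- mult_IZR, <- plus_IZR. f_equal. rewrite (Z.div_mod a m) at 2 by lia. ring.
Qed.

Lemma modR_0 m : 0 < m -> modR 0 m = 0.
Proof. intros; apply modR_small; lra. Qed.

Section QA.
Variables (p : Z) (Hp : prime p).
Notation Q_ := (Qadic p Hp).

Lemma p2 : (2 <= p)%Z. Proof. apply prime_ge_2; auto. Qed.
Lemma IZRp : 2 <= IZR p. Proof. apply IZR_le, p2. Qed.

Definition qv (x : Q_) (k : nat) : R := proj1_sig x k.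

Lemma ppos k : 0 < ppow p k.
Proof. apply ppow_pos; auto. Qed.

Lemma ppow_S k : ppow p (S k) = IZR p * ppow p k.
Proof. reflexivity. Qed.

Lemma qv_range (x : Q_) k : 0 <= qv x k < ppow p k.
Proof. apply (proj2_sig x k). Qed.
Lemma qv_Z1p (x : Q_) k : in_Z1p p (qv x k).
Proof. apply (proj2_sig x k). Qed.

Lemma Qeq (x y : Q_) : (forall k, qv x k = qv y k) -> x = y.
Proof.
  destruct x as [f Hf], y as [g Hg]; unfold qv; simpl; intros H.
  assert (f = g) by (extensionality k; auto). subst; f_equal; apply proof_irrelevance.
Qed.

Lemma ppow_mul k j : (k <= j)%nat -> ppow p j = ppow p k * IZR (p ^ Z.of_nat (j - k)).
Proof.
  intros H. rewrite <- pow_IZR. unfold ppow. rewrite <- pow_add. f_equal; lia.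
Qed.

Lemma qv_diff (x : Q_) k j : (k <= j)%nat -> exists z, qv x j - qv x k = IZR z * ppow p k.
Proof.
  induction 1.
  - exists 0%Z; lra.
  - destruct IHle as [z1 H1]. destruct (proj2 (proj2 (proj2_sig x m))) as [z Hz].
    fold (qv x (S m)) (qv x m) in Hz.
    exists (z1 + z * p ^ Z.of_nat (m - k))%Z. rewrite plus_IZR, mult_IZR.
    rewrite (ppow_mul k m) in Hz by auto. lra.
Qed.

Lemma qv_compat (x : Q_) k j : (k <= j)%nat -> modR (qv x j) (ppow p k) = qv x k.
Proof.
  intros H. destruct (qv_diff x k j H) as [z Hz].
  apply modR_unique with (- z)%Z; [apply ppos| apply qv_range|]. rewrite opp_IZR; lra.
Qed.

Lemma qv_mono (x y : Q_) k j : (j <= k)%nat -> qv x k = qv y k -> qv x j = qv y j.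
Proof. intros H E; rewrite <- (qv_compat x j k), <- (qv_compat y j k), E; auto. Qed.

Lemma qv_add (x y : Q_) k : qv (tadd x y) k = modR (qv x k + qv y k) (ppow p k).
Proof. reflexivity. Qed.
Lemma qv_opp (x : Q_) k : qv (topp x) k = modR (- qv x k) (ppow p k).
Proof. reflexivity. Qed.
Lemma qv_zero k : qv (@tzero Q_) k = 0.
Proof. reflexivity. Qed.

Lemma Qadic_abgroup : is_abgroup Q_.
Proof.
  pose proof ppos as P. repeat split.
  - intros x y z; apply Qeq; intros k; rewrite !qv_add.
    rewrite (Rplus_comm (qv x k)), modR_addl, (Rplus_comm _ (qv z k)), modR_addl by auto.
    f_equal; ring.
  - intros x y; apply Qeq; intros k; rewrite !qv_add; f_equal; ring.
  - intros x; apply Qeq; intros k; rewrite qv_add, qv_zero, Rplus_0_l.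
    apply modR_small, qv_range.
  - intros x; apply Qeq; intros k; rewrite qv_add, qv_opp, qv_zero, modR_addl by auto.
    replace (- qv x k + qv x k) with 0 by ring. apply modR_0; auto.
Qed.

Lemma Qcyl_open k (x : Q_) : topen Q_ (fun y => qv y k = qv x k).
Proof. intros y Hy; exists k; intros y' Hy'; unfold qv in *; congruence. Qed.

Lemma Qadic_good : good Q_.
Proof.
  split; [apply Qadic_abgroup|split; [|split]].
  - intros V H x Hx. destruct (H x Hx) as [U [HU [Ux HUV]]].
    destruct (HU x Ux) as [k Hk]. exists k; auto.
  - intros U V HU HV x [Ux Vx]. destruct (HU x Ux) as [k1 H1]; destruct (HV x Vx) as [k2 H2].
    exists (Nat.max k1 k2). intros y Hy; split; [apply H1|apply H2];
      apply (qv_mono y x (Nat.max k1 k2)); auto; lia.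
  - intros U HU x y Hxy. destruct (HU _ Hxy) as [k Hk].
    exists (fun a => qv a k = qv x k), (fun b => qv b k = qv y k).
    repeat split; try apply Qcyl_open.
    intros a b Ha Hb. apply Hk. change (qv (tadd a (topp b)) k = qv (tadd x (topp y)) k).
    rewrite !qv_add, !qv_opp, Ha, Hb; reflexivity.
Qed.
End QA.

Section QB.
Variables (p : Z) (Hp : prime p).
Notation Q_ := (Qadic p Hp).
Notation qv := (qv p Hp).
Notation P := (Z.to_nat p).

Lemma INR_P : INR P = IZR p.
Proof. rewrite INR_IZR_INZ, Z2Nat.id; auto. pose proof (p2 p Hp); lia. Qed.

Lemma qv_tmuln n (y : Q_) k : qv (tmuln Q_ n y) k = modR (INR n * qv y k) (ppow p k).
Proof.
  induction n.
  - change (tmuln Q_ 0 y) with (@tzero Q_). rewrite qv_zero. change (INR 0) with 0. rewrite Rmult_0_l, modR_0; [reflexivity|exact (ppos p Hp _)].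
  - change (tmuln Q_ (S n) y) with (tadd y (tmuln Q_ n y)).
    rewrite qv_add, IHn, (Rplus_comm (qv y k)), modR_addl by exact (ppos p Hp _).
    rewrite S_INR; f_equal; ring.
Qed.

Lemma mulp_inj (y : Q_) : tmuln Q_ P y = tzero -> y = tzero.
Proof.
  intros E. apply Qeq; intros k. rewrite qv_zero.
  assert (E1 := f_equal (fun z => qv z (S k)) E). simpl in E1.
  change (qv (tmuln Q_ P y) (S k) = qv tzero (S k)) in E1.
  rewrite qv_tmuln, qv_zero, INR_P in E1.
  destruct (modR_spec (IZR p * qv y (S k)) (ppow p (S k))) as [z Hz].
  rewrite E1, ppow_S in Hz.
  assert (Hy : qv y (S k) = IZR (- z) * ppow p k).
  { rewrite opp_IZR. pose proof (IZRp p Hp).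
    apply (Rmult_eq_reg_l (IZR p)); [|lra]. nra. }
  rewrite <- (qv_compat p Hp y k (S k)) by lia. rewrite Hy.
  replace (IZR (- z) * ppow p k) with (0 + IZR (- z) * ppow p k) by ring.
  rewrite modR_shift, modR_0; auto; exact (ppos p Hp _).
Qed.

Lemma mulpe_inj e (y : Q_) : tmuln Q_ (P ^ e) y = tzero -> y = tzero.
Proof.
  revert y; induction e; intros y E.
  - change (P ^ 0)%nat with 1%nat in E. rewrite (tmuln_1 Q_ (Qadic_abgroup p Hp)) in E; auto.
  - rewrite Nat.pow_succ_r', (tmuln_mul Q_ (Qadic_abgroup p Hp)) in E.
    apply IHe. apply mulp_inj; auto.
Qed.

Lemma mulq_inj (B : nat) (y : Q_) : (0 < B)%nat -> rel_prime (Z.of_nat B) p ->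
  tmuln Q_ B y = tzero -> y = tzero.
Proof.
  intros HB Hrp E. apply Qeq; intros k. rewrite qv_zero.
  assert (E1 := f_equal (fun z => qv z k) E). simpl in E1.
  change (qv (tmuln Q_ B y) k = qv tzero k) in E1.
  rewrite qv_tmuln, qv_zero in E1.
  destruct (modR_spec (INR B * qv y k) (ppow p k)) as [z Hz]. rewrite E1 in Hz.
  destruct (qv_Z1p p Hp y k) as [j [w Hw]].
  assert (Eint : (Z.of_nat B * w = (- z) * p ^ Z.of_nat (k + j))%Z).
  { apply eq_IZR. rewrite !mult_IZR, <- Hw, <- INR_IZR_INZ, <- pow_IZR, opp_IZR.
    rewrite pow_add. fold (ppow p k) (ppow p j).
    assert (HH : INR B * qv y k = - IZR z * ppow p k) by lra.
    rewrite <- Rmult_assoc, HH; ring. }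
  assert (Hdiv : (p ^ Z.of_nat (k + j) | w)%Z).
  { apply Gauss with (Z.of_nat B).
    - exists (- z)%Z. rewrite Eint; ring.
    - apply rel_prime_sym, rel_prime_Zpower_r; [lia|]. auto. }
  destruct Hdiv as [c Hc].
  assert (Hy : qv y k = 0 + IZR c * ppow p k).
  { assert (Pj := ppos p Hp j).
    apply (Rmult_eq_reg_r (ppow p j)); [|lra]. rewrite Hw, Hc, mult_IZR, <- pow_IZR.
    unfold ppow; rewrite pow_add. ring. }
  rewrite <- (modR_small (qv y k) (ppow p k)) by apply qv_range.
  rewrite Hy, modR_shift, modR_0; auto; exact (ppos p Hp _).
Qed.

Lemma nat_split (n : nat) : (0 < n)%nat -> exists e B, n = (B * P ^ e)%nat /\ (0 < B)%nat /\
  rel_prime (Z.of_nat B) p.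
Proof.
  intros Hn. pose proof (p2 p Hp) as P2.
  destruct (classic (p | Z.of_nat n)%Z) as [Hd|Hd].
  - destruct (split_pp_aux (Z.to_nat (Z.of_nat n)) p Hp (Z.of_nat n) ltac:(lia) (le_n _) Hd)
      as [e [b [He [Eb [Hb Hpb]]]]].
    exists e, (Z.to_nat b). split; [|split; [lia|]].
    + apply Nat2Z.inj. rewrite Nat2Z.inj_mul, Nat2Z.inj_pow, !Z2Nat.id by lia. rewrite Eb; ring.
    + rewrite Z2Nat.id by lia. apply rel_prime_sym, prime_rel_prime; auto.
  - exists 0%nat, n. split; [simpl; lia|split; auto]. apply rel_prime_sym, prime_rel_prime; auto.
Qed.

Lemma Qadic_tf : torsion_free Q_.
Proof.
  intros y n Hn E. destruct (nat_split n Hn) as [e [B [-> [HB Hrp]]]].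
  rewrite (tmuln_mul Q_ (Qadic_abgroup p Hp)) in E.
  apply (mulpe_inj e). apply (mulq_inj B); auto.
Qed.
End QB.

Definition NQ (p : Z) (Hp : prime p) (x : Qadic p Hp) : Prop := qv p Hp x 0 = 0.

Section QC.
Variables (p : Z) (Hp : prime p).
Notation Q_ := (Qadic p Hp).
Notation qv := (qv p Hp).
Notation P := (Z.to_nat p).
Notation N := (NQ p Hp).

Lemma N_int (x : Q_) k : N x -> qv x k = IZR (Int_part (qv x k)).
Proof.
  intros Hx. destruct (qv_diff p Hp x 0 k) as [z Hz]; [lia|].
  unfold NQ in Hx. rewrite Hx in Hz. unfold ppow in Hz; simpl in Hz.
  replace (qv x k) with (IZR z) by lra. rewrite Int_part_IZR; auto.
Qed.

Lemma divp_ok (x : Q_) : Qp_ok p (fun k => qv x (S k) / IZR p).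
Proof.
  pose proof (IZRp p Hp) as HP. intros k; split; [|split].
  - destruct (qv_Z1p p Hp x (S k)) as [j [w Hw]]. exists (S j), w.
    rewrite <- Hw. unfold ppow; simpl. field; lra.
  - destruct (qv_range p Hp x (S k)) as [H1 H2]. rewrite ppow_S in H2. split.
    + apply Rmult_le_pos; [lra|]. left; apply Rinv_0_lt_compat; lra.
    + apply (Rmult_lt_reg_l (IZR p)); [lra|]. field_simplify; lra.
  - destruct (qv_diff p Hp x (S k) (S (S k))) as [z Hz]; [lia|].
    exists z. rewrite ppow_S in Hz.
    replace (qv x (S (S k)) / IZR p - qv x (S k) / IZR p) with
      ((qv x (S (S k)) - qv x (S k)) / IZR p) by (field; lra).
    rewrite Hz. field; lra.
Qed.

Lemma div_p (x : Q_) : exists y : Q_, tmuln Q_ P y = x.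
Proof.
  exists (exist _ _ (divp_ok x)). apply Qeq; intros k.
  rewrite qv_tmuln, (INR_P p Hp). unfold qv at 1; simpl. fold (qv x (S k)).
  replace (IZR p * (qv x (S k) / IZR p)) with (qv x (S k)) by (pose proof (IZRp p Hp); field; lra).
  apply (qv_compat p Hp); lia.
Qed.

Lemma div_pe e (x : Q_) : exists y : Q_, tmuln Q_ (P ^ e) y = x.
Proof.
  revert x; induction e; intros x.
  - exists x. apply (tmuln_1 Q_ (Qadic_abgroup p Hp)).
  - destruct (IHe x) as [w Hw]. destruct (div_p w) as [y Hy].
    exists y. rewrite Nat.pow_succ_r', Nat.mul_comm, (tmuln_mul Q_ (Qadic_abgroup p Hp)), Hy; auto.
Qed.

Section DivQ.
Variables (B : nat) (HB : (0 < B)%nat) (Hrp : rel_prime (Z.of_nat B) p).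
Variable x : Q_.
Hypothesis Hx : N x.

Lemma rp_Bk k : rel_prime (Z.of_nat B) (p ^ Z.of_nat k).
Proof. apply rel_prime_Zpower_r; auto; lia. Qed.

Lemma ub_ex k : exists u, exists v, (u * Z.of_nat B + v * p ^ Z.of_nat k = 1)%Z.
Proof. destruct (rel_prime_bezout _ _ (rp_Bk k)) as [u v H]. exists u, v; auto. Qed.

Definition ub k : Z := proj1_sig (constructive_indefinite_description _ (ub_ex k)).
Lemma ub_spec k : exists v, (ub k * Z.of_nat B + v * p ^ Z.of_nat k = 1)%Z.
Proof. unfold ub; destruct constructive_indefinite_description; auto. Qed.

Definition zk k : Z := Int_part (qv x k).
Lemma zk_eq k : qv x k = IZR (zk k).
Proof. apply N_int; auto. Qed.

Lemma pk_pos k : (0 < p ^ Z.of_nat k)%Z.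
Proof. apply Z.pow_pos_nonneg; [pose proof (p2 p Hp)|]; lia. Qed.

Lemma zk_range k : (0 <= zk k < p ^ Z.of_nat k)%Z.
Proof.
  pose proof (qv_range p Hp x k) as R. rewrite zk_eq, ppow_IZR in R.
  split; [apply le_IZR|apply lt_IZR]; lra.
Qed.

Lemma zk_diff k : (p ^ Z.of_nat k | zk (S k) - zk k)%Z.
Proof.
  destruct (qv_diff p Hp x k (S k)) as [c Hc]; [lia|].
  rewrite !zk_eq, ppow_IZR, <- minus_IZR, <- mult_IZR in Hc. apply eq_IZR in Hc.
  exists c; auto.
Qed.

Definition Yk k : Z := ((ub k * zk k) mod p ^ Z.of_nat k)%Z.

Lemma Yk_range k : (0 <= Yk k < p ^ Z.of_nat k)%Z.
Proof. apply Z.mod_pos_bound, pk_pos. Qed.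

Lemma Yk_cong k : (p ^ Z.of_nat k | Z.of_nat B * Yk k - zk k)%Z.
Proof.
  destruct (ub_spec k) as [v Hv]. unfold Yk.
  rewrite (Z.mod_eq _ _) by (pose proof (pk_pos k); lia).
  exists (Z.of_nat B * (- ((ub k * zk k) / p ^ Z.of_nat k)) - v * zk k)%Z.
  replace (zk k) with ((ub k * Z.of_nat B + v * p ^ Z.of_nat k) * zk k)%Z at 3 by (rewrite Hv; ring).
  ring.
Qed.

Lemma pk_div_S k : (p ^ Z.of_nat k | p ^ Z.of_nat (S k))%Z.
Proof. exists p. rewrite Nat2Z.inj_succ, Z.pow_succ_r by lia. ring. Qed.

Lemma Yk_diff k : (p ^ Z.of_nat k | Yk (S k) - Yk k)%Z.
Proof.
  apply Gauss with (Z.of_nat B); [|apply rel_prime_sym, rp_Bk].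
  replace (Z.of_nat B * (Yk (S k) - Yk k))%Z with
    ((Z.of_nat B * Yk (S k) - zk (S k)) + (zk (S k) - zk k) - (Z.of_nat B * Yk k - zk k))%Z by ring.
  apply Z.divide_sub_r; [apply Z.divide_add_r|].
  - eapply Z.divide_trans; [apply pk_div_S|apply Yk_cong].
  - apply zk_diff.
  - apply Yk_cong.
Qed.

Lemma Yq_ok : Qp_ok p (fun k => IZR (Yk k)).
Proof.
  intros k; split; [|split].
  - exists 0%nat, (Yk k). unfold ppow; simpl; ring.
  - rewrite ppow_IZR. pose proof (Yk_range k). split; [apply IZR_le|apply IZR_lt]; lia.
  - destruct (Yk_diff k) as [c Hc]. exists c. rewrite ppow_IZR, <- minus_IZR, <- mult_IZR, Hc; auto.
Qed.

Definition yq : Q_ := exist _ _ Yq_ok.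

Lemma yq_N : N yq.
Proof.
  unfold NQ, qv; simpl. unfold Yk. change (Z.of_nat 0) with 0%Z. rewrite Z.pow_0_r, Z.mod_1_r; auto.
Qed.

Lemma yq_spec : tmuln Q_ B yq = x.
Proof.
  apply Qeq; intros k. rewrite qv_tmuln. unfold qv at 1; simpl.
  rewrite INR_IZR_INZ, <- mult_IZR, ppow_IZR, modR_IZR by apply pk_pos.
  rewrite zk_eq. f_equal. apply Zdivide_mod_minus; [apply zk_range|apply Yk_cong].
Qed.
End DivQ.

Lemma div_q B (x : Q_) : (0 < B)%nat -> rel_prime (Z.of_nat B) p -> N x ->
  exists y, N y /\ tmuln Q_ B y = x.
Proof. intros HB Hrp Hx. exists (yq B HB Hrp x Hx); split; [apply yq_N|apply yq_spec]. Qed.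

Lemma N_div (x : Q_) : N x -> forall n, (0 < n)%nat -> exists y, tmuln Q_ n y = x.
Proof.
  intros Hx n Hn. destruct (nat_split p Hp n Hn) as [e [B [-> [HB Hrp]]]].
  destruct (div_q B x HB Hrp Hx) as [w [_ Hw]].
  destruct (div_pe e w) as [y Hy]. exists y.
  rewrite (tmuln_mul Q_ (Qadic_abgroup p Hp)), Hy; auto.
Qed.
End QC.

Section QD.
Variables (p : Z) (Hp : prime p).
Notation Q_ := (Qadic p Hp).
Notation qv := (qv p Hp).
Notation P := (Z.to_nat p).
Notation N := (NQ p Hp).

Lemma ppow0 : ppow p 0 = 1. Proof. reflexivity. Qed.

Lemma N_subgroup : is_subgroup Q_ N.
Proof.
  unfold NQ; repeat split.
  - intros x y Hx Hy. rewrite qv_add, Hx, Hy, ppow0, Rplus_0_l. apply modR_0; lra.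
  - intros x Hx. rewrite qv_opp, Hx, ppow0, Ropp_0. apply modR_0; lra.
Qed.

Lemma N_open : topen Q_ N.
Proof.
  intros x Hx. exists 0%nat. intros y Hy. unfold NQ in *. unfold qv in *. congruence.
Qed.

Lemma N_mult (x : Q_) : exists k, forall k', (k <= k')%nat -> N (tmuln Q_ (fact k') x).
Proof.
  destruct (qv_Z1p p Hp x 0) as [j [w Hw]].
  assert (Hj : N (tmuln Q_ (P ^ j) x)).
  { unfold NQ. rewrite qv_tmuln, pow_INR, (INR_P p Hp). fold (ppow p j).
    rewrite Rmult_comm, Hw, ppow0. replace 1 with (IZR 1) by reflexivity.
    rewrite modR_IZR by lia. rewrite Z.mod_1_r; auto. }
  exists (P ^ j)%nat. intros k' Hk'.
  assert (HPj : (0 < P ^ j)%nat).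
  { apply Nat.neq_0_lt_0, Nat.pow_nonzero. pose proof (p2 p Hp); lia. }
  destruct (n_div_fact (P ^ j) HPj) as [c Hc].
  destruct (fact_div _ _ Hk') as [c' Hc'].
  rewrite Hc', Hc, !(tmuln_mul Q_ (Qadic_abgroup p Hp)).
  apply (sub_tmuln Q_ N (N_subgroup)).
  apply (sub_tmuln Q_ N (N_subgroup)); auto.
Qed.
End QD.

Lemma sub_open_lift (A : TopAb) (M : A -> Prop) (HM : is_subgroup A M) (W : subTopAb A M HM -> Prop) :
  topen A (fun x => exists H : M x, W (exist _ x H)) -> topen (subTopAb A M HM) W.
Proof.
  intros HO. exists (fun x => exists H : M x, W (exist _ x H)). split; auto.
  intros [x Hx]; simpl; split.
  - intros Hw; exists Hx; auto.
  - intros [H' Hw]. rewrite (proof_irrelevance _ Hx H'); auto.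
Qed.

Section QE.
Variables (p : Z) (Hp : prime p) (HN : is_subgroup (Qadic p Hp) (NQ p Hp)).
Notation Q_ := (Qadic p Hp).
Notation qv := (qv p Hp).
Notation N := (NQ p Hp).
Notation SQ := (subTopAb Q_ N HN).
Notation ZP := (Zadic p (prime_ge_2 p Hp)).

Lemma toZ_ok (z : SQ) : Zn_ok p (fun k => Int_part (qv (proj1_sig z) k)).
Proof.
  destruct z as [x Hx]; simpl. intros k; split.
  - pose proof (qv_range p Hp x k) as R. rewrite (N_int p Hp x k Hx), ppow_IZR in R.
    split; [apply le_IZR|apply lt_IZR]; unfold npow; lra.
  - destruct (qv_diff p Hp x k (S k)) as [c Hc]; [lia|].
    rewrite (N_int p Hp x k Hx), (N_int p Hp x (S k) Hx), ppow_IZR, <- minus_IZR, <- mult_IZR in Hc.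
    apply eq_IZR in Hc. exists c; auto.
Qed.
Definition toZ (z : SQ) : ZP := exist _ _ (toZ_ok z).

Lemma ofZ_ok (y : ZP) : Qp_ok p (fun k => IZR (zv _ _ y k)).
Proof.
  intros k; split; [|split].
  - exists 0%nat, (zv _ _ y k). unfold ppow; simpl; ring.
  - rewrite ppow_IZR. pose proof (zv_range _ _ y k) as R. unfold npow in R.
    split; [apply IZR_le|apply IZR_lt]; lia.
  - destruct (proj2 (proj2_sig y k)) as [c Hc]. exists c.
    rewrite ppow_IZR, <- minus_IZR, <- mult_IZR. unfold zv. rewrite Hc; auto.
Qed.
Definition ofZq (y : ZP) : Q_ := exist _ _ (ofZ_ok y).
Lemma ofZ_N y : N (ofZq y).
Proof.
  unfold NQ, qv, ofZq; simpl. pose proof (zv_range _ _ y 0) as R. unfold npow in R; simpl in R.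
  replace (zv p (prime_ge_2 p Hp) y 0) with 0%Z by lia. reflexivity.
Qed.
Definition ofZ (y : ZP) : SQ := exist _ _ (ofZ_N y).

Lemma sub_Q_iso : top_iso SQ ZP.
Proof.
  apply (iso_of_inverse _ _ toZ ofZ).
  - intros [x Hx] [y Hy]. apply Zeq; intros k. unfold toZ, zv; simpl.
    fold (qv x k) (qv y k). rewrite (N_int p Hp x k Hx), (N_int p Hp y k Hy) at 1.
    rewrite ppow_IZR, <- plus_IZR, modR_IZR by (apply Z.pow_pos_nonneg; pose proof (p2 p Hp); lia).
    rewrite !Int_part_IZR. reflexivity.
  - intros [x Hx]. apply sub_eq. simpl. apply Qeq; intros k. unfold ofZq, qv at 1; simpl.
    unfold zv; simpl. symmetry; apply (N_int p Hp x k Hx).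
  - intros y. apply Zeq; intros k. unfold toZ, zv; simpl. apply Int_part_IZR.
  - intros V HV. apply sub_open_lift. intros x [Hx Hv].
    destruct (HV _ Hv) as [k Hk]. exists k. intros x' Hx'.
    assert (Hx0 : N x').
    { unfold NQ. rewrite (qv_mono p Hp x' x k 0); auto; lia. }
    exists Hx0. apply Hk. simpl. fold (qv x' k) (qv x k). unfold qv in *. rewrite Hx'; reflexivity.
  - intros V [U [HU EU]] y Hy. apply EU in Hy. destruct (HU _ Hy) as [k Hk].
    exists k. intros y' Hy'. apply EU. apply Hk. simpl. unfold zv in *. rewrite Hy'; reflexivity.
Qed.
End QE.

Close Scope R_scope.

Lemma good_unit : good unitTopAb.
Proof.
  split; [apply abgroup_unit|split; [apply local_top_unit|split]].
  - intros U V _ _; exact I.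
  - intros U HU x y Hxy. exists (fun _ => True), (fun _ => True); repeat split; auto.
    all: intros a b _ _; destruct a, b, x, y; auto.
Qed.

Lemma good_prod A B : good A -> good B -> good (prodTopAb A B).
Proof.
  intros [HA [LA [IA SA]]] [HB [LB [IB SB]]].
  split; [apply abgroup_prod; auto|split; [apply local_top_prod|split]].
  - intros U V HU HV z [Uz Vz].
    destruct (HU z Uz) as [U1 [U2 [HU1 [HU2 [H1 [H2 H3]]]]]].
    destruct (HV z Vz) as [V1 [V2 [HV1 [HV2 [H4 [H5 H6]]]]]].
    exists (fun a => U1 a /\ V1 a), (fun b => U2 b /\ V2 b).
    split; [apply IA; auto|split; [apply IB; auto|split; [split; auto|split; [split; auto|]]]].
    intros a b [Ha1 Ha2] [Hb1 Hb2]; split; auto.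
  - intros U HU [x1 x2] [y1 y2] Hxy.
    destruct (HU _ Hxy) as [U1 [U2 [HU1 [HU2 [H1 [H2 H3]]]]]]. simpl in H1, H2.
    destruct (SA U1 HU1 x1 y1 H1) as [V1 [W1 [HV1 [HW1 [Hx1 [Hy1 K1]]]]]].
    destruct (SB U2 HU2 x2 y2 H2) as [V2 [W2 [HV2 [HW2 [Hx2 [Hy2 K2]]]]]].
    exists (fun z : prodTopAb A B => V1 (fst z) /\ V2 (snd z)),
           (fun z : prodTopAb A B => W1 (fst z) /\ W2 (snd z)).
    repeat split; try apply box_open; auto.
    intros [a1 a2] [b1 b2] [Ha1 Ha2] [Hb1 Hb2]. apply (H3 (tadd a1 (topp b1)) (tadd a2 (topp b2))); auto.
Qed.

Definition Qp (s : {p : Z | prime p}) : TopAb := Qadic (proj1_sig s) (proj2_sig s).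

Fixpoint NL (ps : list {p : Z | prime p}) : bigprod (map Qp ps) -> Prop :=
  match ps as l return bigprod (map Qp l) -> Prop with
  | nil => fun _ => True
  | s :: ps' => fun z => NQ (proj1_sig s) (proj2_sig s) (fst z) /\ NL ps' (snd z)
  end.

Lemma TL_good ps : good (bigprod (map Qp ps)).
Proof. induction ps; simpl; [apply good_unit| apply good_prod; auto; apply Qadic_good]. Qed.

Lemma TL_tf ps : torsion_free (bigprod (map Qp ps)).
Proof.
  induction ps; simpl.
  - intros [] _ _ _; reflexivity.
  - apply tf_prod; auto. apply Qadic_abgroup. apply (proj1 (TL_good ps)). apply Qadic_tf.
Qed.

Lemma NL_sub ps : is_subgroup _ (NL ps).
Proof.
  induction ps as [|s ps IH]; simpl.
  - repeat split.
  - destruct (N_subgroup (proj1_sig s) (proj2_sig s)) as [A0 [A1 A2]].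
    destruct IH as [B0 [B1 B2]]. repeat split; simpl; try tauto.
    + apply A1; tauto. + apply B1; tauto. + apply A2; tauto. + apply B2; tauto.
Qed.

Lemma NL_open ps : topen _ (NL ps).
Proof.
  induction ps as [|s ps IH]; simpl; [exact I|].
  apply (box_open (Qp s) (bigprod (map Qp ps))); auto. apply N_open.
Qed.

Lemma NL_div ps : forall t, NL ps t -> forall n, (0 < n)%nat ->
  exists y, tmuln (bigprod (map Qp ps)) n y = t.
Proof.
  induction ps as [|s ps IH]; simpl.
  - intros [] _ n _. exists (tt : unitTopAb). destruct (tmuln unitTopAb n tt); reflexivity.
  - intros [t1 t2] [H1 H2] n Hn. simpl in H1, H2.
    destruct (N_div (proj1_sig s) (proj2_sig s) t1 H1 n Hn) as [y1 Hy1]. destruct (IH t2 H2 n Hn) as [y2 Hy2].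
    exists ((y1, y2) : prodTopAb (Qp s) (bigprod (map Qp ps))).
    change (tmuln (prodTopAb (Qp s) (bigprod (map Qp ps))) n (y1, y2) = (t1, t2)).
    apply injective_projections; [rewrite tmuln_fst|rewrite tmuln_snd]; auto.
Qed.

Lemma NL_mult ps : forall t, exists k, forall k', (k <= k')%nat ->
  NL ps (tmuln (bigprod (map Qp ps)) (fact k') t).
Proof.
  induction ps as [|s ps IH]; simpl.
  - intros _; exists 0%nat; auto.
  - intros [t1 t2]. destruct (N_mult (proj1_sig s) (proj2_sig s) t1) as [k1 H1]. destruct (IH t2) as [k2 H2].
    exists (Nat.max k1 k2). intros k' Hk'.
    change (NQ (proj1_sig s) (proj2_sig s) (fst (tmuln (prodTopAb (Qp s) (bigprod (map Qp ps))) (fact k') (t1, t2))) /\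
            NL ps (snd (tmuln (prodTopAb (Qp s) (bigprod (map Qp ps))) (fact k') (t1, t2)))). split.
    + rewrite tmuln_fst; apply H1; lia.
    + rewrite tmuln_snd; apply H2; lia.
Qed.

Lemma sub_unit_iso HN : top_iso (subTopAb unitTopAb (fun _ => True) HN) unitTopAb.
Proof.
  apply (iso_of_inverse (subTopAb unitTopAb (fun _ => True) HN) unitTopAb
    (fun _ => (tt : unitTopAb)) (fun _ => exist (fun _ : unitTopAb => True) (tt : unitTopAb) I)).
  - intros; reflexivity.
  - intros [[] []]; apply sub_eq; reflexivity.
  - intros []; reflexivity.
  - intros V _. exists (fun _ => V tt); split; [exact I|]. intros; tauto.
  - intros V _. exact I.
Qed.

Lemma sub_prod_iso (A B : TopAb) (N1 : A -> Prop) (N2 : B -> Prop)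
  (HN1 : is_subgroup A N1) (HN2 : is_subgroup B N2) HN :
  inter_closed A -> inter_closed B -> topen A N1 -> topen B N2 ->
  top_iso (subTopAb (prodTopAb A B) (fun z => N1 (fst z) /\ N2 (snd z)) HN)
          (prodTopAb (subTopAb A N1 HN1) (subTopAb B N2 HN2)).
Proof.
  intros IA IB O1 O2.
  set (SP := subTopAb (prodTopAb A B) (fun z => N1 (fst z) /\ N2 (snd z)) HN).
  set (f := fun z : SP => ((exist _ (fst (proj1_sig z)) (proj1 (proj2_sig z)),
                         exist _ (snd (proj1_sig z)) (proj2 (proj2_sig z)))
                         : prodTopAb (subTopAb A N1 HN1) (subTopAb B N2 HN2))).
  set (g := fun w : prodTopAb (subTopAb A N1 HN1) (subTopAb B N2 HN2) =>
     (exist (fun z : prodTopAb A B => N1 (fst z) /\ N2 (snd z))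
        (proj1_sig (fst w), proj1_sig (snd w)) (conj (proj2_sig (fst w)) (proj2_sig (snd w))) : SP)).
  apply (iso_of_inverse _ _ f g).
  - intros x y. apply injective_projections; apply sub_eq; reflexivity.
  - intros [[a b] H]. apply sub_eq; reflexivity.
  - intros [a b]. unfold f, g; simpl. f_equal; apply sub_eq; reflexivity.
  - intros V HV. apply sub_open_lift. intros w [H Hv].
    destruct (HV _ Hv) as [U' [W' [HU' [HW' [H1 [H2 H3]]]]]].
    destruct HU' as [U1 [HU1 EU1]]. destruct HW' as [W1 [HW1 EW1]].
    exists (fun a => U1 a /\ N1 a), (fun b => W1 b /\ N2 b). repeat split.
    + apply IA; auto. + apply IB; auto.
    + apply EU1 in H1; exact H1. + exact (proj1 H).
    + apply EW1 in H2; exact H2. + exact (proj2 H).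
    + intros a b [Ha Na] [Hb Nb]. exists (conj Na Nb). apply H3.
      * apply EU1; exact Ha. * apply EW1; exact Hb.
  - intros V [U [HU EU]] [a b] Hv. apply EU in Hv. simpl in Hv.
    destruct (HU _ Hv) as [U1 [U2 [HU1 [HU2 [H1 [H2 H3]]]]]].
    exists (fun a' : subTopAb A N1 HN1 => U1 (proj1_sig a')), (fun b' : subTopAb B N2 HN2 => U2 (proj1_sig b')).
    repeat split; auto.
    + exists U1; split; auto; tauto.
    + exists U2; split; auto; tauto.
    + intros a' b' Ha Hb. apply EU. simpl. apply H3; auto.
Qed.

Lemma NL_iso ps : forall HN : is_subgroup _ (NL ps),
  top_iso (subTopAb (bigprod (map Qp ps)) (NL ps) HN) (bigprod (map Zp ps)).
Proof.
  induction ps as [|s ps IH]; intros HN; simpl.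
  - apply sub_unit_iso.
  - eapply top_iso_trans.
    + apply (sub_prod_iso (Qp s) (bigprod (map Qp ps)) _ _
               (N_subgroup (proj1_sig s) (proj2_sig s)) (NL_sub ps)).
      * apply (proj1 (proj2 (proj2 (Qadic_good _ _)))).
      * apply (proj1 (proj2 (proj2 (TL_good ps)))).
      * apply N_open.
      * apply NL_open.
    + apply prod_iso; [|apply IH]. destruct s as [p Hp]. apply sub_Q_iso.
Qed.

Theorem lemma6p10 (G : TopAb) (M : G -> Prop) (HM : is_subgroup G M) :
  is_LCA G ->
  tcompact G M -> topen G M ->
  divisible G -> torsion_free G ->
  adic (subTopAb G M HM) ->
  quotient_artinian G M ->
  local G.
Proof.
  intros HL _ MO Hdiv Htf [l [Hfac Hiso]] Hart.
  assert (HG := proj1 HL).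
  assert (Hsubtf : torsion_free (subTopAb G M HM)).
  { intros z n Hn E. apply sub_eq. simpl. apply (Htf _ n Hn).
    rewrite <- sub_val_tmuln, E; reflexivity. }
  assert (Hw : wtf (bigprod l)).
  { destruct (top_iso_sym _ _ Hiso) as [f [fa [fi _]]].
    apply (wtf_of_hom _ _ f fa fi (sub_abgroup _ _ _ HG) Hsubtf). }
  destruct (adic_reduce l Hfac Hw) as [ps Hps].
  exists ps. change (top_iso G (bigprod (map Qp ps))).
  apply (ATL G (bigprod (map Qp ps)) M (NL ps) HM (NL_sub ps) fact).
  - apply good_of_LCA; auto.
  - apply TL_good.
  - exact MO.
  - apply NL_open.
  - eapply top_iso_trans; [exact Hiso|]. eapply top_iso_trans; [exact Hps|].
    apply top_iso_sym, NL_iso.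
  - intros k; apply lt_O_fact.
  - apply fact_div.
  - apply artinian_fact; auto.
  - intros t. destruct (NL_mult ps t) as [k Hk]. exists k; apply Hk; lia.
  - intros x _ k. apply Hdiv, lt_O_fact.
  - intros t Ht k. apply NL_div; auto. apply lt_O_fact.
  - exact Htf.
  - apply TL_tf.
Qed.
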